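(* In the location game $\mathcal L(n,\mathcal C)$ on the circle of radius $1$, for every $n\ge1$: (a) $\operatorname{PoA}(n)=2$ if $n$ is even, and $\operatorname{PoA}(n)=\dfrac{2n}{n+1}$ if $n$ is odd; (b) $\operatorname{PoS}(n)=1$.
   Context: Location game $\mathcal L(n,\mathcal C)$ on the circle $\mathcal C$ of radius $1$ (circumference $2\pi$), with arc-length measure $\lambda$ and arc distance $d$. There are $n$ players, each choosing a point of $\mathcal C$. Consumers are distributed according to $\lambda$, and each shops at a closest occupied location. Consumers equidistant from several closest occupied locations are split equally among those locations, and the share of a location is split equally among the players located there. Payoff is the mass of consumers attracted. Nash equilibria are pure. Social cost: \[ C(\boldsymbol x)=\int_{\mathcal C}\min_i d(x_i,y)\,d\lambda(y). \] With $\mathcal E_n$ the set of pure Nash equilibria, \[ \operatorname{PoA}(n)=\frac{\sup_{\boldsymbol x\in\mathcal E_n}C(\boldsymbol x)}{\inf_{\boldsymbol x\in\mathcal C^n}C(\boldsymbol x)}, \qquad \operatorname{PoS}(n)=\frac{\inf_{\boldsymbol x\in\mathcal E_n}C(\boldsymbol x)}{\inf_{\boldsymbol x\in\mathcal C^n}C(\boldsymbol x)}. \] *)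

(* Defs.v *)
From Stdlib Require Import Reals Lra ClassicalEpsilon.
Open Scope R_scope.

(** Total Riemann integral on [a,b]: the (proof-independent) value RiemannInt
    when f is Riemann integrable, and 0 otherwise. *)
Definition Rint (f : R -> R) (a b : R) : R :=
  match excluded_middle_informative
          (exists v, exists pr : Riemann_integrable f a b, RiemannInt pr = v) with
  | left H => proj1_sig (constructive_indefinite_description _ H)
  | right _ => 0
  end.

(** Points of the unit circle are represented by their angle in [0, 2*PI). *)
Definition on_circle (a : R) : Prop := 0 <= a < 2 * PI.

Definition arcd (a b : R) : R := Rmin (Rabs (a - b)) (2 * PI - Rabs (a - b)).

(** A strategy profile: player j (j < n) is located at angle x j. *)
Definition profile := nat -> R.

Definition valid (n : nat) (x : profile) : Prop := forall j, (j < n)%nat -> on_circle (x j).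

(** min_{j<n} d(x_j, y)  (meaningful for n >= 1). *)
Fixpoint mind (x : profile) (n : nat) (y : R) : R :=
  match n with
  | O => 0
  | S O => arcd (x O) y
  | S m => Rmin (mind x m y) (arcd (x m) y)
  end.

Fixpoint sumR (n : nat) (f : nat -> R) : R :=
  match n with O => 0 | S m => sumR m f + f m end.

Definition ind (b : bool) : R := if b then 1 else 0.
Definition Reqb (a b : R) : bool := if Req_EM_T a b then true else false.

Definition closest (x : profile) (n : nat) (y : R) (j : nat) : bool :=
  Reqb (arcd (x j) y) (mind x n y).

(** j is the first (smallest-index) player at its location *)
Definition first_at (x : profile) (j : nat) : bool :=
  Reqb (sumR j (fun k => ind (Reqb (x k) (x j)))) 0.

(** number of distinct closest occupied locations to y *)
Definition nclosest_locs (x : profile) (n : nat) (y : R) : R :=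
  sumR n (fun j => ind (closest x n y j && first_at x j)).

Definition nplayers_at (x : profile) (n : nat) (p : R) : R :=
  sumR n (fun j => ind (Reqb (x j) p)).

(** share of consumer y obtained by player i: consumers are split equally
    among the closest occupied locations, and a location's share equally
    among the players located there. *)
Definition share (x : profile) (n : nat) (i : nat) (y : R) : R :=
  if closest x n y i then / (nclosest_locs x n y * nplayers_at x n (x i)) else 0.

Definition payoff (x : profile) (n : nat) (i : nat) : R :=
  Rint (share x n i) 0 (2 * PI).

Definition social_cost (x : profile) (n : nat) : R :=
  Rint (mind x n) 0 (2 * PI).

Definition upd (x : profile) (i : nat) (p : R) : profile :=
  fun j => if Nat.eqb j i then p else x j.

Definition is_NE (n : nat) (x : profile) : Prop :=
  valid n x /\
  forall i, (i < n)%nat -> forall p, on_circle p ->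
    payoff (upd x i p) n i <= payoff x n i.

Definition is_lower_bound (E : R -> Prop) (m : R) : Prop := forall c, E c -> m <= c.
Definition is_glb (E : R -> Prop) (m : R) : Prop :=
  is_lower_bound E m /\ forall b, is_lower_bound E b -> b <= m.

Definition all_costs (n : nat) : R -> Prop :=
  fun c => exists x, valid n x /\ c = social_cost x n.
Definition NE_costs (n : nat) : R -> Prop :=
  fun c => exists x, is_NE n x /\ c = social_cost x n.

(* Main.v *)
Require Import Defs.
From Stdlib Require Import Reals.
Open Scope R_scope.
From Stdlib Require Import Lra Lia List Bool Classical ClassicalEpsilon Sorting.Sorted.
From Coquelicot Require Coquelicot.

Module P1M.
Import Coquelicot.Coquelicot.
Import Defs.
Open Scope R_scope.

Lemma Rint_eq (f : R -> R) (a b v : R) : is_RInt f a b v -> Rint f a b = v.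
Proof.
  intros Hi. unfold Rint.
  destruct excluded_middle_informative as [H|H].
  - destruct constructive_indefinite_description as [w Hw]. simpl.
    destruct Hw as [pr Hpr]. rewrite <- Hpr, <- RInt_Reals. now apply is_RInt_unique.
  - exfalso; apply H. exists v.
    exists (ex_RInt_Reals_0 f a b (ex_intro _ v Hi)).
    rewrite <- RInt_Reals; now apply is_RInt_unique.
Qed.

Lemma is_RInt_exc1 (f g : R -> R) (a b v e : R) : a <= b ->
  (forall y, a < y < b -> y <> e -> f y = g y) -> is_RInt g a b v -> is_RInt f a b v.
Proof.
  intros Hab Hfg Hg.
  destruct (Rlt_dec a e) as [H1|H1]; [destruct (Rlt_dec e b) as [H2|H2]|].
  - assert (E1 : ex_RInt g a e) by (apply (@ex_RInt_Chasles_1 R_CompleteNormedModule) with b; [lra| exists v; auto]).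
    assert (E2 : ex_RInt g e b) by (apply (@ex_RInt_Chasles_2 R_CompleteNormedModule) with a; [lra| exists v; auto]).
    destruct E1 as [v1 E1]; destruct E2 as [v2 E2].
    assert (Hv : v = v1 + v2).
    { pose proof (is_RInt_Chasles _ _ _ _ _ _ E1 E2) as H3.
      apply (@is_RInt_unique R_CompleteNormedModule) in H3; apply (@is_RInt_unique R_CompleteNormedModule) in Hg. rewrite <- Hg, H3. reflexivity. }
    subst v. apply (is_RInt_Chasles f a e b v1 v2).
    + apply (is_RInt_ext g). intros y Hy. rewrite Rmin_left in Hy by lra. rewrite Rmax_right in Hy by lra.
      symmetry; apply Hfg; lra. auto.
    + apply (is_RInt_ext g). intros y Hy. rewrite Rmin_left in Hy by lra. rewrite Rmax_right in Hy by lra.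
      symmetry; apply Hfg; lra. auto.
  - apply (is_RInt_ext g). intros y Hy. rewrite Rmin_left in Hy by lra. rewrite Rmax_right in Hy by lra.
    symmetry; apply Hfg; lra. auto.
  - apply (is_RInt_ext g). intros y Hy. rewrite Rmin_left in Hy by lra. rewrite Rmax_right in Hy by lra.
    symmetry; apply Hfg; lra. auto.
Qed.

Lemma is_RInt_exc (L : list R) : forall (f g : R -> R) (a b v : R), a <= b ->
  (forall y, a < y < b -> ~ In y L -> f y = g y) -> is_RInt g a b v -> is_RInt f a b v.
Proof.
  induction L as [|e L IH]; intros f g a b v Hab Hfg Hg.
  - apply (is_RInt_ext g). intros y Hy. rewrite Rmin_left in Hy by lra. rewrite Rmax_right in Hy by lra.
    symmetry; apply Hfg; auto. auto.
  - set (h := fun y => if Req_EM_T y e then g y else f y).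
    assert (Hh : is_RInt h a b v).
    { apply (IH h g a b v Hab); auto. intros y Hy Hn. unfold h.
      destruct Req_EM_T; auto. apply Hfg; auto. simpl; intros [He|He]; [congruence|tauto]. }
    apply (is_RInt_exc1 f h a b v e Hab); auto.
    intros y Hy Hne. unfold h. destruct Req_EM_T; tauto.
Qed.

Definition TP := 2 * PI.
Definition onc (a : R) := 0 <= a < 2 * PI.

Definition off (a b : R) : R := if Rle_dec a b then b - a else b - a + 2 * PI.

Lemma PI_pos' : 0 < PI. Proof. exact PI_RGT_0. Qed.

Lemma off_range a b : onc a -> onc b -> 0 <= off a b < 2 * PI.
Proof. unfold onc, off; intros; destruct Rle_dec; lra. Qed.

Lemma off_self a : off a a = 0.
Proof. unfold off; destruct Rle_dec; lra. Qed.

Lemma off_0 a b : onc a -> onc b -> off a b = 0 -> a = b.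
Proof. unfold onc, off; intros; destruct Rle_dec; lra. Qed.

Lemma off_pos a b : onc a -> onc b -> a <> b -> 0 < off a b.
Proof. intros Ha Hb Hn. destruct (off_range a b Ha Hb).
  destruct (Req_dec (off a b) 0); [|lra]. exfalso; apply Hn; now apply off_0. Qed.

Lemma off_sym a b : onc a -> onc b -> a <> b -> off b a = 2 * PI - off a b.
Proof. unfold onc, off; intros; destruct Rle_dec; destruct Rle_dec; try lra.
Qed.

Lemma off_V1 a b c : onc a -> onc b -> onc c -> off a b <= off a c -> off b c = off a c - off a b.
Proof. unfold onc, off; intros; repeat destruct Rle_dec; lra. Qed.

Lemma off_V2 a b c : onc a -> onc b -> onc c -> off b c <= off a c -> off a b = off a c - off b c.
Proof. unfold onc, off; intros; repeat destruct Rle_dec; lra. Qed.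

Lemma off_V3 a b c : onc a -> onc b -> onc c -> off a b + off b c < 2 * PI -> off a c = off a b + off b c.
Proof. unfold onc, off; intros; repeat destruct Rle_dec; lra. Qed.

Lemma arcd_off a b : onc a -> onc b -> arcd a b = Rmin (off a b) (off b a).
Proof.
  unfold onc, arcd, off; intros.
  destruct (Rle_dec a b); destruct (Rle_dec b a).
  - assert (a = b) by lra; subst. replace (b - b) with 0 by lra. rewrite Rabs_R0.
    unfold Rmin; repeat destruct Rle_dec; lra.
  - rewrite Rabs_left1 by lra. unfold Rmin; repeat destruct Rle_dec; lra.
  - rewrite Rabs_pos_eq by lra. unfold Rmin; repeat destruct Rle_dec; lra.
  - lra.
Qed.

Definition wr (t : R) := if Rlt_dec t (2 * PI) then t else t - 2 * PI.
Definition wrN (t : R) := if Rle_dec 0 t then t else t + 2 * PI.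

Lemma off_wr z y d : onc z -> onc y -> off z y = d -> y = wr (z + d).
Proof. unfold onc, off, wr; intros; subst; repeat destruct Rle_dec; repeat destruct Rlt_dec; lra. Qed.

Lemma off_wrN z y d : onc z -> onc y -> off y z = d -> y = wrN (z - d).
Proof. unfold onc, off, wrN; intros; subst; repeat destruct Rle_dec; lra. Qed.

End P1M.

Module P2M.
Import P1M.
Import Defs.
Open Scope R_scope.

Lemma Reqb_true a b : Reqb a b = true <-> a = b.
Proof. unfold Reqb; destruct Req_EM_T; split; intros; congruence. Qed.
Lemma Reqb_false a b : Reqb a b = false <-> a <> b.
Proof. unfold Reqb; destruct Req_EM_T; split; intros; congruence. Qed.
Lemma Reqb_refl a : Reqb a a = true.
Proof. now apply Reqb_true. Qed.

Lemma sumR_ext n f g : (forall k, (k < n)%nat -> f k = g k) -> sumR n f = sumR n g.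
Proof. induction n; simpl; intros H; auto. rewrite IHn by (intros; apply H; lia). rewrite H by lia; auto. Qed.
Lemma sumR_plus n f g : sumR n (fun k => f k + g k) = sumR n f + sumR n g.
Proof. induction n; simpl; [lra|]. rewrite IHn; lra. Qed.
Lemma sumR_scal n c f : sumR n (fun k => c * f k) = c * sumR n f.
Proof. induction n; simpl; [lra|]. rewrite IHn; lra. Qed.
Lemma sumR_le n f g : (forall k, (k < n)%nat -> f k <= g k) -> sumR n f <= sumR n g.
Proof. induction n; simpl; intros H; [lra|]. assert (H1:= H n (Nat.lt_succ_diag_r n)).
  assert (sumR n f <= sumR n g) by (apply IHn; intros; apply H; lia). lra. Qed.
Lemma sumR_const n c : sumR n (fun _ => c) = INR n * c.
Proof. induction n; simpl sumR; [simpl; lra|]. rewrite IHn, S_INR; lra. Qed.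
Lemma sumR_zero n f : (forall k, (k < n)%nat -> f k = 0) -> sumR n f = 0.
Proof. intros H. rewrite (sumR_ext n f (fun _ => 0)) by auto. rewrite sumR_const; lra. Qed.
Lemma sumR_swap n m (f : nat -> nat -> R) :
  sumR n (fun j => sumR m (fun k => f j k)) = sumR m (fun k => sumR n (fun j => f j k)).
Proof. induction n; simpl. - symmetry; apply sumR_zero; auto.
  - rewrite IHn. rewrite <- sumR_plus. reflexivity. Qed.
Lemma ind_range b : 0 <= ind b <= 1.
Proof. destruct b; simpl; lra. Qed.
Lemma sumR_nonneg n f : (forall k, (k < n)%nat -> 0 <= f k) -> 0 <= sumR n f.
Proof. induction n; simpl; intros H; [lra|]. assert (0 <= f n) by (apply H; lia).
  assert (0 <= sumR n f) by (apply IHn; intros; apply H; lia). lra. Qed.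

Lemma sumR_ind_zero n b : sumR n (fun k => ind (b k)) = 0 <-> forall k, (k < n)%nat -> b k = false.
Proof.
  induction n; simpl; split; intros H.
  - intros; lia.
  - auto.
  - assert (0 <= sumR n (fun k => ind (b k))) by (apply sumR_nonneg; intros; apply ind_range).
    destruct (b n) eqn:Eb; simpl in H.
    + lra.
    + intros k Hk. destruct (Nat.eq_dec k n); [subst; auto|]. apply IHn; [lra|lia].
  - rewrite (proj2 IHn) by (intros; apply H; lia). rewrite H by lia. simpl; lra.
Qed.

Fixpoint minf (P : nat -> bool) (h : nat -> R) (n : nat) : R :=
  match n with O => 2 * PI | S k => if P k then Rmin (minf P h k) (h k) else minf P h k end.

Lemma minf_le P h n k : (k < n)%nat -> P k = true -> minf P h n <= h k.
Proof. induction n; simpl; intros Hk Hp; [lia|].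
  destruct (Nat.eq_dec k n). - subst. rewrite Hp. apply Rmin_r.
  - assert (minf P h n <= h k) by (apply IHn; auto; lia). destruct (P n); auto.
    eapply Rle_trans; [apply Rmin_l|auto]. Qed.
Lemma minf_le2 P h n : minf P h n <= 2 * PI.
Proof. induction n; simpl; [lra|]. destruct (P n); auto. eapply Rle_trans; [apply Rmin_l|auto]. Qed.
Lemma minf_ge P h n c : (forall k, (k < n)%nat -> P k = true -> c <= h k) -> c <= 2 * PI -> c <= minf P h n.
Proof. induction n; simpl; intros H H2; auto. destruct (P n) eqn:E.
  - apply Rmin_glb; [apply IHn; auto|apply H; auto].
  - apply IHn; auto. Qed.
Lemma minf_cases P h n : (forall k, (k < n)%nat -> P k = true -> h k <= 2 * PI) -> (exists k, (k < n)%nat /\ P k = true /\ minf P h n = h k) \/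
   (minf P h n = 2 * PI /\ forall k, (k < n)%nat -> P k = false).
Proof.
  induction n; simpl; intros Hh.
  - right; split; auto; intros; lia.
  - destruct (P n) eqn:E.
    + unfold Rmin at 1; destruct Rle_dec.
      * destruct (IHn ltac:(intros; apply Hh; auto)) as [[k [? [? ?]]]|[? ?]].
        -- left; exists k; repeat split; auto.
        -- left; exists n; repeat split; auto. assert (h n <= 2 * PI) by (apply Hh; auto).
           rewrite H; lra.
      * left; exists n; repeat split; auto.
    + destruct (IHn ltac:(intros; apply Hh; auto)) as [[k [? [? ?]]]|[? ?]].
      * left; exists k; repeat split; auto.
      * right; split; auto. intros k Hk. destruct (Nat.eq_dec k n); [subst; auto|apply H0; lia].
Qed.

Definition PR (x : profile) (e : nat) (z : R) : nat -> bool :=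
  fun k => negb (Nat.eqb k e) && negb (Reqb (x k) z).
Definition gR (x : profile) (n e : nat) (z : R) : R := minf (PR x e z) (fun k => off z (x k)) n.
Definition gL (x : profile) (n e : nat) (z : R) : R := minf (PR x e z) (fun k => off (x k) z) n.

Lemma PR_true x e z k : PR x e z k = true <-> k <> e /\ x k <> z.
Proof. unfold PR. rewrite Bool.andb_true_iff, !Bool.negb_true_iff, Reqb_false, Nat.eqb_neq. tauto. Qed.
Lemma PR_false x e z k : PR x e z k = false <-> k = e \/ x k = z.
Proof. split; intros H.
  - destruct (Nat.eq_dec k e); auto. destruct (Req_dec (x k) z); auto.
    assert (PR x e z k = true) by (apply PR_true; auto). congruence.
  - destruct (PR x e z k) eqn:E; auto. apply PR_true in E. tauto. Qed.

Definition validn (n : nat) (x : profile) := forall j, (j < n)%nat -> onc (x j).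

Lemma gR_cases x n e z : validn n x -> onc z ->
  (exists k, (k < n)%nat /\ k <> e /\ x k <> z /\ gR x n e z = off z (x k)) \/
  (gR x n e z = 2 * PI /\ forall k, (k < n)%nat -> k <> e -> x k = z).
Proof. intros Hv Hz. unfold gR.
  destruct (minf_cases (PR x e z) (fun k => off z (x k)) n) as [[k [Hk [Hp E]]]|[E H]].
  - intros k Hk _. pose proof (off_range z (x k) Hz (Hv k Hk)); lra.
  - apply PR_true in Hp. left; exists k; tauto.
  - right; split; auto. intros k Hk Hke. specialize (H k Hk). apply PR_false in H. tauto. Qed.
Lemma gL_cases x n e z : validn n x -> onc z ->
  (exists k, (k < n)%nat /\ k <> e /\ x k <> z /\ gL x n e z = off (x k) z) \/
  (gL x n e z = 2 * PI /\ forall k, (k < n)%nat -> k <> e -> x k = z).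
Proof. intros Hv Hz. unfold gL.
  destruct (minf_cases (PR x e z) (fun k => off (x k) z) n) as [[k [Hk [Hp E]]]|[E H]].
  - intros k Hk _. pose proof (off_range (x k) z (Hv k Hk) Hz); lra.
  - apply PR_true in Hp. left; exists k; tauto.
  - right; split; auto. intros k Hk Hke. specialize (H k Hk). apply PR_false in H. tauto. Qed.
Lemma gR_le x n e z k : (k < n)%nat -> k <> e -> x k <> z -> gR x n e z <= off z (x k).
Proof. intros. unfold gR. apply (minf_le _ (fun k => off z (x k))); auto. apply PR_true; auto. Qed.
Lemma gL_le x n e z k : (k < n)%nat -> k <> e -> x k <> z -> gL x n e z <= off (x k) z.
Proof. intros. unfold gL. apply (minf_le _ (fun k => off (x k) z)); auto. apply PR_true; auto. Qed.
Lemma gR_le2 x n e z : gR x n e z <= 2 * PI. Proof. apply minf_le2. Qed.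
Lemma gL_le2 x n e z : gL x n e z <= 2 * PI. Proof. apply minf_le2. Qed.
Lemma gR_ge x n e z c : (forall k, (k < n)%nat -> k <> e -> x k <> z -> c <= off z (x k)) -> c <= 2 * PI -> c <= gR x n e z.
Proof. intros H H2. unfold gR. apply minf_ge; auto. intros k Hk Hp. apply PR_true in Hp. apply H; tauto. Qed.
Lemma gL_ge x n e z c : (forall k, (k < n)%nat -> k <> e -> x k <> z -> c <= off (x k) z) -> c <= 2 * PI -> c <= gL x n e z.
Proof. intros H H2. unfold gL. apply minf_ge; auto. intros k Hk Hp. apply PR_true in Hp. apply H; tauto. Qed.

Lemma gR_pos x n e z : validn n x -> onc z -> 0 < gR x n e z.
Proof. intros Hv Hz. destruct (gR_cases x n e z Hv Hz) as [[k [Hk [_ [Hne ->]]]]|[-> _]].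
  - apply off_pos; auto.
  - pose proof PI_pos'; lra. Qed.
Lemma gL_pos x n e z : validn n x -> onc z -> 0 < gL x n e z.
Proof. intros Hv Hz. destruct (gL_cases x n e z Hv Hz) as [[k [Hk [_ [Hne ->]]]]|[-> _]].
  - apply off_pos; auto.
  - pose proof PI_pos'; lra. Qed.

Lemma mind_spec x n y : (1 <= n)%nat ->
  (forall j, (j < n)%nat -> mind x n y <= arcd (x j) y) /\
  exists j, (j < n)%nat /\ mind x n y = arcd (x j) y.
Proof.
  induction n as [|m IH]; intros Hn; [lia|].
  destruct m as [|m'].
  - simpl. split. + intros j Hj. assert (j = 0%nat) by lia; subst; lra. + exists 0%nat; split; auto.
  - change (mind x (S (S m')) y) with (Rmin (mind x (S m') y) (arcd (x (S m')) y)).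
    destruct (IH ltac:(lia)) as [H1 [j [Hj Hj2]]]. split.
    + intros k Hk. destruct (Nat.eq_dec k (S m')). * subst; apply Rmin_r.
      * eapply Rle_trans; [apply Rmin_l|apply H1; lia].
    + unfold Rmin; destruct Rle_dec. * exists j; split; auto.
      * exists (S m'); split; auto.
Qed.

Lemma first_at_iff x j : first_at x j = true <-> forall k, (k < j)%nat -> x k <> x j.
Proof. unfold first_at. rewrite Reqb_true. rewrite sumR_ind_zero.
  split; intros H k Hk; specialize (H k Hk); [apply Reqb_false; auto| apply Reqb_false; auto]. Qed.

Lemma first_count0 x n c : (forall k, (k < n)%nat -> x k <> c) ->
  sumR n (fun j => ind (Reqb (x j) c && first_at x j)) = 0.
Proof. intros H. apply sumR_zero. intros k Hk. assert (Reqb (x k) c = false) by (apply Reqb_false; auto).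
  rewrite H0; reflexivity. Qed.

Lemma first_count1 x n c : (exists k, (k < n)%nat /\ x k = c) ->
  sumR n (fun j => ind (Reqb (x j) c && first_at x j)) = 1.
Proof.
  induction n; intros [k [Hk Hc]]; [lia|]. simpl.
  destruct (classic (exists k, (k < n)%nat /\ x k = c)) as [He|He].
  - rewrite IHn by auto. destruct (Reqb (x n) c) eqn:E; simpl; [|lra].
    assert (first_at x n = false).
    { destruct (first_at x n) eqn:F; auto. apply first_at_iff with (k:=proj1_sig (constructive_indefinite_description _ He)) in F.
      - destruct (constructive_indefinite_description _ He) as [k' [H1 H2]]; simpl in F.
        apply Reqb_true in E. exfalso; apply F; congruence.
      - destruct (constructive_indefinite_description _ He) as [k' [H1 H2]]; simpl; auto. }
    rewrite H; simpl; lra.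
  - assert (k = n) by (destruct (Nat.eq_dec k n); auto; exfalso; apply He; exists k; split; auto; lia). subst k.
    rewrite first_count0 by (intros k' Hk' E; apply He; eauto).
    assert (Reqb (x n) c = true) by (apply Reqb_true; auto). rewrite H.
    assert (first_at x n = true) by (apply first_at_iff; intros k' Hk' E; apply He; exists k'; split; auto; congruence).
    rewrite H0; simpl; lra.
Qed.

Lemma sum_first_q x n : sumR n (fun j => ind (first_at x j) * nplayers_at x n (x j)) = INR n.
Proof.
  unfold nplayers_at.
  transitivity (sumR n (fun j => sumR n (fun k => ind (Reqb (x k) (x j) && first_at x j)))).
  { apply sumR_ext; intros j Hj. rewrite <- sumR_scal. apply sumR_ext; intros k Hk.
    destruct (first_at x j), (Reqb (x k) (x j)); simpl; lra. }
  rewrite sumR_swap. rewrite <- (Rmult_1_r (INR n)). rewrite <- sumR_const.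
  apply sumR_ext; intros k Hk.
  rewrite <- (first_count1 x n (x k)) by eauto. apply sumR_ext; intros j Hj.
  destruct (Reqb (x k) (x j)) eqn:E1; destruct (Reqb (x j) (x k)) eqn:E2; auto;
  try (apply Reqb_true in E1; apply Reqb_false in E2; congruence);
  try (apply Reqb_true in E2; apply Reqb_false in E1; congruence).
Qed.

End P2M.

Module P3M.
Import P1M.
Import P2M.
Import Defs.
Open Scope R_scope.

Definition Rltb (a b : R) : bool := if Rlt_dec a b then true else false.
Lemma Rltb_true a b : Rltb a b = true <-> a < b.
Proof. unfold Rltb; destruct Rlt_dec; split; intros; auto; try congruence; lra. Qed.
Lemma Rltb_false a b : Rltb a b = false <-> b <= a.
Proof. unfold Rltb; destruct Rlt_dec; split; intros; auto; try congruence; lra. Qed.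

Definition cb (z r l y : R) : bool := Rltb (off z y) (r / 2) || Rltb (off y z) (l / 2).
Definition rr x n z := gR x n n z.
Definition ll x n z := gL x n n z.
Definition cellb x n z y := cb z (rr x n z) (ll x n z) y.

Lemma arcd_le1 a b : onc a -> onc b -> arcd a b <= off a b.
Proof. intros; rewrite arcd_off by auto; apply Rmin_l. Qed.
Lemma arcd_le2 a b : onc a -> onc b -> arcd a b <= off b a.
Proof. intros; rewrite arcd_off by auto; apply Rmin_r. Qed.
Lemma arcd_gt a b d : onc a -> onc b -> d < off a b -> d < off b a -> d < arcd a b.
Proof. intros; rewrite arcd_off by auto; unfold Rmin; destruct Rle_dec; lra. Qed.

Section Geo.
Variable x : profile.
Variable n : nat.
Hypothesis Hv : validn n x.

Lemma G1 z y : onc z -> onc y -> cb z (rr x n z) (ll x n z) y = true ->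
  forall j, (j < n)%nat -> x j <> z -> arcd z y < arcd (x j) y.
Proof.
  intros Hz Hy Hc j Hj Hne. set (w := x j). assert (Hw : onc w) by (apply Hv; auto).
  unfold cb in Hc. apply orb_true_iff in Hc. rewrite !Rltb_true in Hc.
  assert (Hr : rr x n z <= off z w) by (apply gR_le; auto; lia).
  assert (Hl : ll x n z <= off w z) by (apply gL_le; auto; lia).
  pose proof (off_sym z w Hz Hw (not_eq_sym Hne)) as S1.
  pose proof (off_pos w z Hw Hz Hne) as P1. pose proof (off_pos z w Hz Hw (not_eq_sym Hne)) as P2.
  pose proof (off_range z y Hz Hy). pose proof (off_range y z Hy Hz).
  pose proof (gR_pos x n n z Hv Hz). pose proof (gL_pos x n n z Hv Hz).
  unfold rr, ll in *.
  destruct Hc as [Hc|Hc].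
  - set (d := off z y) in *. assert (Dd : d = off z y) by reflexivity.
    assert (arcd z y <= d) by (apply arcd_le1; auto).
    assert (E1 : off y w = off z w - d) by (apply off_V1; auto; lra).
    assert (E2 : off w y = off w z + d) by (apply off_V3; auto; lra).
    assert (d < arcd w y) by (apply arcd_gt; auto; lra). lra.
  - set (d := off y z) in *. assert (Dd : d = off y z) by reflexivity.
    assert (arcd z y <= d) by (apply arcd_le2; auto).
    assert (E1 : off w y = off w z - d) by (apply off_V2; auto; lra).
    assert (E2 : off y w = d + off z w) by (apply off_V3; auto; lra).
    assert (d < arcd w y) by (apply arcd_gt; auto; lra). lra.
Qed.

Lemma G2 z y : onc z -> onc y -> (exists k, (k < n)%nat /\ x k = z) ->
  (forall j, (j < n)%nat -> arcd z y <= arcd (x j) y) ->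
  off z y <= rr x n z / 2 \/ off y z <= ll x n z / 2.
Proof.
  intros Hz Hy [k0 [Hk0 Hxk0]] Hnear.
  destruct (Rle_dec (off z y) (rr x n z / 2)); auto.
  destruct (Rle_dec (off y z) (ll x n z / 2)); auto. exfalso.
  set (d1 := off z y) in *. set (d2 := off y z) in *.
  assert (Dd1 : d1 = off z y) by reflexivity. assert (Dd2 : d2 = off y z) by reflexivity.
  pose proof (gR_pos x n n z Hv Hz). pose proof (gL_pos x n n z Hv Hz).
  unfold rr, ll in *.
  assert (Hyz : y <> z) by (intro; subst; unfold d1 in n0; rewrite off_self in n0; lra).
  assert (Hd : d2 = 2 * PI - d1) by (apply off_sym; auto).
  assert (Ha : arcd z y = Rmin d1 d2) by (apply arcd_off; auto).
  pose proof (off_range z y Hz Hy).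
  destruct (gR_cases x n n z Hv Hz) as [[kv [Hkv [_ [Hv1 Er]]]]|[Er Hall]].
  - set (v := x kv) in *. assert (Dv : v = x kv) by reflexivity. assert (Hvo : onc v) by (apply Hv; auto).
    pose proof (off_range z v Hz Hvo).
    destruct (gL_cases x n n z Hv Hz) as [[ku [Hku [_ [Hu1 El]]]]|[El Hall]].
    2:{ exfalso; apply Hv1; apply Hall; auto; lia. }
    set (u := x ku) in *. assert (Du : u = x ku) by reflexivity. assert (Huo : onc u) by (apply Hv; auto).
    pose proof (off_range u z Huo Hz).
    destruct (Rle_dec d1 d2).
    + assert (Hm : arcd z y = d1) by (rewrite Ha; unfold Rmin; destruct Rle_dec; lra).
      specialize (Hnear kv Hkv). fold v in Hnear.
      destruct (Rle_dec d1 (gR x n n z)).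
      * assert (E : off y v = gR x n n z - d1) by (rewrite Er; apply off_V1; auto; lra).
        assert (arcd v y <= off y v) by (apply arcd_le2; auto). lra.
      * assert (E : off v y = d1 - gR x n n z) by (rewrite Er; apply off_V1; auto; lra).
        assert (arcd v y <= off v y) by (apply arcd_le1; auto). lra.
    + assert (Hm : arcd z y = d2) by (rewrite Ha; unfold Rmin; destruct Rle_dec; lra).
      specialize (Hnear ku Hku). fold u in Hnear.
      destruct (Rle_dec d2 (gL x n n z)).
      * assert (E : off u y = gL x n n z - d2) by (rewrite El; apply off_V2; auto; lra).
        assert (arcd u y <= off u y) by (apply arcd_le1; auto). lra.
      * assert (E : off y u = d2 - gL x n n z) by (rewrite El; apply off_V2; auto; lra).
        assert (arcd u y <= off y u) by (apply arcd_le2; auto). lra.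
  - destruct (gL_cases x n n z Hv Hz) as [[ku [Hku [_ [Hu1 El]]]]|[El _]].
    + exfalso; apply Hu1; apply Hall; auto; lia.
    + rewrite Er in n0. rewrite El in n1. lra.
Qed.

Fixpoint exc (k : nat) : list R :=
  match k with O => nil
  | S k' => x k' :: wr (x k' + rr x n (x k') / 2) :: wrN (x k' - ll x n (x k') / 2) :: exc k' end.

Lemma exc_in y k : (k <= n)%nat -> ~ In y (exc k) -> forall j, (j < k)%nat ->
  y <> x j /\ y <> wr (x j + rr x n (x j) / 2) /\ y <> wrN (x j - ll x n (x j) / 2).
Proof. induction k; intros Hk Hn j Hj; [lia|]. simpl in Hn.
  destruct (Nat.eq_dec j k). - subst. repeat split; intro E; apply Hn; rewrite E; simpl; auto.
  - apply IHk; auto; try lia. intro; apply Hn; tauto. Qed.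

Lemma UN y : (1 <= n)%nat -> 0 < y < 2 * PI -> ~ In y (exc n) ->
  exists c, (exists k, (k < n)%nat /\ x k = c) /\ cb c (rr x n c) (ll x n c) y = true /\
    mind x n y = arcd c y /\
    forall j, (j < n)%nat -> x j <> c -> arcd c y < arcd (x j) y.
Proof.
  intros Hn Hy Hex. assert (Hyo : onc y) by (unfold onc; lra).
  destruct (mind_spec x n y Hn) as [H1 [j0 [Hj0 E0]]].
  set (c := x j0) in *. assert (Hc : onc c) by (apply Hv; auto).
  assert (Hcb : cb c (rr x n c) (ll x n c) y = true).
  { destruct (G2 c y Hc Hyo ltac:(eauto) ltac:(intros; rewrite <- E0; auto)) as [G|G].
    - destruct (Req_dec (off c y) (rr x n c / 2)) as [E|E].
      + exfalso. destruct (exc_in y n (le_n n) Hex j0 Hj0) as [_ [A _]]. apply A.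
        fold c. apply off_wr; auto.
      + unfold cb. apply orb_true_iff; left; apply Rltb_true; lra.
    - destruct (Req_dec (off y c) (ll x n c / 2)) as [E|E].
      + exfalso. destruct (exc_in y n (le_n n) Hex j0 Hj0) as [_ [_ A]]. apply A.
        fold c. apply off_wrN; auto.
      + unfold cb. apply orb_true_iff; right; apply Rltb_true; lra. }
  exists c. split; [eauto|]. split; auto. split; auto.
  intros j Hj Hne. apply G1; auto.
Qed.

Lemma cell_unique c z y : onc y -> (exists k, (k < n)%nat /\ x k = z) ->
   (exists k, (k < n)%nat /\ x k = c) ->
   cb c (rr x n c) (ll x n c) y = true ->
   (forall j, (j < n)%nat -> x j <> c -> arcd c y < arcd (x j) y) ->
   cellb x n z y = Reqb z c.
Proof.
  intros Hy [k [Hk Hz]] [kc [Hkc Hc]] Hcc Hstr.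
  assert (Hzo : onc z) by (subst; apply Hv; auto).
  destruct (Req_dec z c).
  - rewrite H, Reqb_refl. exact Hcc.
  - rewrite (proj2 (Reqb_false z c) H). unfold cellb.
    destruct (cb z (rr x n z) (ll x n z) y) eqn:E; auto. exfalso.
    assert (A1 := Hstr k Hk ltac:(congruence)).
    assert (A2 := G1 z y Hzo Hy E kc Hkc ltac:(congruence)). rewrite Hz, Hc in *. lra.
Qed.

End Geo.

End P3M.

Module P4M.
Import Coquelicot.Coquelicot.
Import P1M.
Import P2M.
Import P3M.
Import Defs.
Open Scope R_scope.

Section PW.
Variable x : profile.
Variable n : nat.
Hypothesis Hv : validn n x.
Hypothesis Hn : (1 <= n)%nat.

Lemma closest_eq y c : mind x n y = arcd c y ->
  (forall j, (j < n)%nat -> x j <> c -> arcd c y < arcd (x j) y) ->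
  forall j, (j < n)%nat -> closest x n y j = Reqb (x j) c.
Proof.
  intros Hm Hs j Hj. unfold closest. rewrite Hm. destruct (Req_dec (x j) c) as [E|E].
  - rewrite E, !Reqb_refl. auto.
  - rewrite (proj2 (Reqb_false _ _) E). apply Reqb_false. specialize (Hs j Hj E). lra.
Qed.

Lemma PW_share i y : (i < n)%nat -> 0 < y < 2 * PI -> ~ In y (exc x n n) ->
  share x n i y = ind (cellb x n (x i) y) * / nplayers_at x n (x i).
Proof.
  intros Hi Hy Hex. destruct (UN x n Hv y Hn Hy Hex) as [c [Hc [Hcb [Hm Hs]]]].
  assert (Hcl := closest_eq y c Hm Hs).
  assert (Hyo : onc y) by (unfold onc; lra).
  assert (Hncl : nclosest_locs x n y = 1).
  { unfold nclosest_locs. rewrite <- (first_count1 x n c Hc). apply sumR_ext; intros k Hk.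
    rewrite Hcl; auto. }
  unfold share. rewrite Hcl by auto. rewrite Hncl.
  rewrite (cell_unique x n Hv c (x i) y Hyo ltac:(eauto) Hc Hcb Hs).
  destruct (Reqb (x i) c); simpl; [rewrite Rmult_1_l, Rmult_1_l|]; lra.
Qed.

Lemma PW_mind y : 0 < y < 2 * PI -> ~ In y (exc x n n) ->
  mind x n y = sumR n (fun j => ind (first_at x j) * (ind (cellb x n (x j) y) * arcd (x j) y)).
Proof.
  intros Hy Hex. destruct (UN x n Hv y Hn Hy Hex) as [c [Hc [Hcb [Hm Hs]]]].
  assert (Hyo : onc y) by (unfold onc; lra).
  rewrite Hm. rewrite <- (Rmult_1_r (arcd c y)). rewrite <- (first_count1 x n c Hc).
  rewrite <- sumR_scal. apply sumR_ext; intros j Hj.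
  rewrite (cell_unique x n Hv c (x j) y Hyo ltac:(eauto) Hc Hcb Hs).
  destruct (Req_dec (x j) c) as [E|E].
  - rewrite E, Reqb_refl. destruct (first_at x j); simpl; lra.
  - rewrite (proj2 (Reqb_false _ _) E). simpl. lra.
Qed.

Lemma PW_one y : 0 < y < 2 * PI -> ~ In y (exc x n n) ->
  1 = sumR n (fun j => ind (first_at x j) * ind (cellb x n (x j) y)).
Proof.
  intros Hy Hex. destruct (UN x n Hv y Hn Hy Hex) as [c [Hc [Hcb [Hm Hs]]]].
  assert (Hyo : onc y) by (unfold onc; lra).
  rewrite <- (first_count1 x n c Hc). apply sumR_ext; intros j Hj.
  rewrite (cell_unique x n Hv c (x j) y Hyo ltac:(eauto) Hc Hcb Hs).
  destruct (Reqb (x j) c), (first_at x j); simpl; lra.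
Qed.
End PW.

Lemma int_id (a b : R) : is_RInt (fun t => t) a b ((b * b - a * a) / 2).
Proof.
  assert (H := @is_RInt_derive R_CompleteNormedModule (fun t => t * t / 2) (fun t => t) a b).
  replace ((b * b - a * a) / 2) with (minus (b * b / 2) (a * a / 2)).
  2:{ unfold minus, plus, opp; simpl. lra. }
  apply H.
  - intros t _. auto_derive; auto. lra.
  - intros t _. apply continuous_id.
Qed.

Lemma int_rev (a b : R) : is_RInt (fun t => 2 * PI - t) a b (2 * PI * (b - a) - (b * b - a * a) / 2).
Proof.
  assert (H := @is_RInt_derive R_CompleteNormedModule (fun t => 2 * PI * t - t * t / 2) (fun t => 2 * PI - t) a b).
  replace (2 * PI * (b - a) - (b * b - a * a) / 2) with (minus (2 * PI * b - b * b / 2) (2 * PI * a - a * a / 2)).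
  2:{ unfold minus, plus, opp; simpl. lra. }
  apply H.
  - intros t _. auto_derive; auto. lra.
  - intros t _. apply (continuous_minus (fun _ => 2 * PI) (fun t => t)). apply continuous_const. apply continuous_id.
Qed.

Lemma int_const (a b c : R) : is_RInt (fun _ => c) a b ((b - a) * c).
Proof. apply (@is_RInt_const R_NormedModule). Qed.

Lemma int_sum (a b : R) (f : nat -> R -> R) (v : nat -> R) m :
  (forall j, (j < m)%nat -> is_RInt (f j) a b (v j)) ->
  is_RInt (fun y => sumR m (fun j => f j y)) a b (sumR m v).
Proof.
  induction m; intros H; simpl.
  - assert (H0 := int_const a b 0). rewrite Rmult_0_r in H0. exact H0.
  - apply (@is_RInt_plus R_NormedModule (fun y => sumR m (fun j => f j y)) (f m)).
    apply IHm; intros; apply H; lia. apply H; lia.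
Qed.

Lemma int_scal (a b c v : R) (f : R -> R) : is_RInt f a b v -> is_RInt (fun y => c * f y) a b (c * v).
Proof. intros H. apply (@is_RInt_scal R_NormedModule f a b c v H). Qed.

Lemma int_ext (f g : R -> R) (a b v : R) : a <= b -> (forall y, a < y < b -> f y = g y) ->
  is_RInt g a b v -> is_RInt f a b v.
Proof. intros Hab H. apply is_RInt_ext. intros y Hy. rewrite Rmin_left in Hy by lra.
  rewrite Rmax_right in Hy by lra. symmetry; apply H; auto. Qed.

Lemma int_chasles (f : R -> R) (a b c v1 v2 : R) : is_RInt f a b v1 -> is_RInt f b c v2 -> is_RInt f a c (v1 + v2).
Proof. intros H1 H2. apply (@is_RInt_Chasles R_NormedModule f a b c v1 v2 H1 H2). Qed.

Lemma int_unique (f : R -> R) (a b v w : R) : is_RInt f a b v -> is_RInt f a b w -> v = w.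
Proof. intros H1 H2. apply (@is_RInt_unique R_CompleteNormedModule) in H1.
  apply (@is_RInt_unique R_CompleteNormedModule) in H2. congruence. Qed.

Lemma int_shift (G : R -> R) (z v : R) : onc z -> is_RInt G 0 (2 * PI) v ->
  is_RInt (fun y => G (off z y)) 0 (2 * PI) v.
Proof.
  intros Hz HG. unfold onc in Hz.
  assert (E1 : ex_RInt G 0 (2 * PI - z)) by (apply (@ex_RInt_Chasles_1 R_CompleteNormedModule) with (2 * PI); [lra|exists v; auto]).
  assert (E2 : ex_RInt G (2 * PI - z) (2 * PI)) by (apply (@ex_RInt_Chasles_2 R_CompleteNormedModule) with 0; [lra|exists v; auto]).
  destruct E1 as [v1 E1]; destruct E2 as [v2 E2].
  assert (Hv : v = v1 + v2) by (apply (int_unique G 0 (2*PI)); auto; apply (int_chasles _ 0 (2 * PI - z) (2 * PI)); auto).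
  subst v. rewrite Rplus_comm. apply (int_chasles _ 0 z (2 * PI) v2 v1).
  - assert (H := @is_RInt_comp_lin R_NormedModule G 1 (2 * PI - z) 0 z v2).
    apply (int_ext _ (fun y => scal 1 (G (1 * y + (2 * PI - z))))). lra.
    + intros y Hy. unfold scal; simpl; unfold mult; simpl. rewrite Rmult_1_l.
      unfold off; destruct Rle_dec; [lra|]. f_equal; lra.
    + apply H. replace (1 * 0 + (2 * PI - z)) with (2 * PI - z) by lra.
      replace (1 * z + (2 * PI - z)) with (2 * PI) by lra. auto.
  - assert (H := @is_RInt_comp_lin R_NormedModule G 1 (- z) z (2 * PI) v1).
    apply (int_ext _ (fun y => scal 1 (G (1 * y + - z)))). lra.
    + intros y Hy. unfold scal; simpl; unfold mult; simpl. rewrite Rmult_1_l.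
      unfold off; destruct Rle_dec; [|lra]. f_equal; lra.
    + apply H. replace (1 * z + - z) with 0 by lra.
      replace (1 * (2 * PI) + - z) with (2 * PI - z) by lra. auto.
Qed.

End P4M.

Module P5M.
Import Coquelicot.Coquelicot.
Import P1M.
Import P2M.
Import P3M.
Import P4M.
Import Defs.
Open Scope R_scope.

Definition G1f (r l t : R) := ind (Rltb t (r / 2) || Rltb (2 * PI - t) (l / 2)).

Lemma G1_int r l : 0 < r <= 2 * PI -> 0 < l <= 2 * PI ->
  is_RInt (G1f r l) 0 (2 * PI) ((r + l) / 2).
Proof.
  intros Hr Hl. pose proof PI_pos'.
  replace ((r + l) / 2) with (((r / 2 - 0) * 1 + (2 * PI - l / 2 - r / 2) * 0) + (2 * PI - (2 * PI - l / 2)) * 1) by lra.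
  apply (int_chasles _ 0 (2 * PI - l / 2) (2 * PI)).
  apply (int_chasles _ 0 (r / 2) (2 * PI - l / 2)).
  - apply (int_ext _ (fun _ => 1)); [lra| |apply int_const].
    intros t Ht. unfold G1f. rewrite (proj2 (Rltb_true _ _)) by lra. reflexivity.
  - apply (int_ext _ (fun _ => 0)); [lra| |apply int_const].
    intros t Ht. unfold G1f. rewrite (proj2 (Rltb_false _ _)) by lra.
    rewrite (proj2 (Rltb_false _ _)) by lra. reflexivity.
  - apply (int_ext _ (fun _ => 1)); [lra| |apply int_const].
    intros t Ht. unfold G1f. rewrite (proj2 (Rltb_true (2 * PI - t) _)) by lra. rewrite orb_true_r. reflexivity.
Qed.

Lemma G2_int r l : 0 < r <= 2 * PI -> 0 < l <= 2 * PI ->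
  is_RInt (fun t => G1f r l t * Rmin t (2 * PI - t)) 0 (2 * PI) ((r * r + l * l) / 8).
Proof.
  intros Hr Hl. pose proof PI_pos'.
  replace ((r * r + l * l) / 8) with
    (((r / 2 * (r / 2) - 0 * 0) / 2 + (2 * PI - l / 2 - r / 2) * 0) +
     (2 * PI * (2 * PI - (2 * PI - l / 2)) - (2 * PI * (2 * PI) - (2 * PI - l / 2) * (2 * PI - l / 2)) / 2)) by field.
  apply (int_chasles _ 0 (2 * PI - l / 2) (2 * PI)).
  apply (int_chasles _ 0 (r / 2) (2 * PI - l / 2)).
  - apply (int_ext _ (fun t => t)); [lra| |apply int_id].
    intros t Ht. unfold G1f. rewrite (proj2 (Rltb_true _ _)) by lra. simpl.
    unfold Rmin; destruct Rle_dec; lra.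
  - apply (int_ext _ (fun _ => 0)); [lra| |apply int_const].
    intros t Ht. unfold G1f. rewrite (proj2 (Rltb_false _ _)) by lra.
    rewrite (proj2 (Rltb_false _ _)) by lra. simpl; lra.
  - apply (int_ext _ (fun t => 2 * PI - t)); [lra| |apply int_rev].
    intros t Ht. unfold G1f. rewrite (proj2 (Rltb_true (2 * PI - t) _)) by lra. rewrite orb_true_r. simpl.
    unfold Rmin; destruct Rle_dec; lra.
Qed.

Lemma cell_int1 z r l : onc z -> 0 < r <= 2 * PI -> 0 < l <= 2 * PI ->
  is_RInt (fun y => ind (cb z r l y)) 0 (2 * PI) ((r + l) / 2).
Proof.
  intros Hz Hr Hl. pose proof PI_pos'.
  assert (HG : is_RInt (fun y => G1f r l (off z y)) 0 (2 * PI) ((r + l) / 2)).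
  { apply int_shift; auto. apply G1_int; auto. }
  apply (is_RInt_exc (z :: nil) (fun y => ind (cb z r l y)) (fun y => G1f r l (off z y)) 0 (2 * PI) ((r + l) / 2)); [lra| |exact HG].
  intros y Hy Hn. assert (Hyz : y <> z) by (intro; apply Hn; simpl; auto).
  assert (Hyo : onc y) by (unfold onc; lra).
  unfold cb, G1f. rewrite (off_sym z y Hz Hyo (not_eq_sym Hyz)). reflexivity.
Qed.

Lemma cell_int2 z r l : onc z -> 0 < r <= 2 * PI -> 0 < l <= 2 * PI ->
  is_RInt (fun y => ind (cb z r l y) * arcd z y) 0 (2 * PI) ((r * r + l * l) / 8).
Proof.
  intros Hz Hr Hl. pose proof PI_pos'.
  assert (HG : is_RInt (fun y => G1f r l (off z y) * Rmin (off z y) (2 * PI - off z y)) 0 (2 * PI) ((r * r + l * l) / 8)).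
  { apply (int_shift (fun t => G1f r l t * Rmin t (2 * PI - t))); auto. apply G2_int; auto. }
  apply (is_RInt_exc (z :: nil) (fun y => ind (cb z r l y) * arcd z y) (fun y => G1f r l (off z y) * Rmin (off z y) (2 * PI - off z y)) 0 (2 * PI) ((r * r + l * l) / 8)); [lra| |exact HG].
  intros y Hy Hn. assert (Hyz : y <> z) by (intro; apply Hn; simpl; auto).
  assert (Hyo : onc y) by (unfold onc; lra).
  unfold cb, G1f. rewrite arcd_off by auto. rewrite (off_sym z y Hz Hyo (not_eq_sym Hyz)). reflexivity.
Qed.

Section Formulas.
Variable x : profile.
Variable n : nat.
Hypothesis Hv : validn n x.
Hypothesis Hn : (1 <= n)%nat.

Lemma rr_rng j : (j < n)%nat -> 0 < rr x n (x j) <= 2 * PI.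
Proof. intros; split; [apply gR_pos; auto|apply gR_le2]. Qed.
Lemma ll_rng j : (j < n)%nat -> 0 < ll x n (x j) <= 2 * PI.
Proof. intros; split; [apply gL_pos; auto|apply gL_le2]. Qed.

Lemma payoff_formula i : (i < n)%nat ->
  payoff x n i = / nplayers_at x n (x i) * ((rr x n (x i) + ll x n (x i)) / 2).
Proof.
  intros Hi. unfold payoff. apply Rint_eq. pose proof PI_pos'.
  apply (is_RInt_exc (exc x n n) (share x n i) (fun y => / nplayers_at x n (x i) * ind (cellb x n (x i) y))); [lra| |].
  - intros y Hy Hex. rewrite (PW_share x n Hv Hn i y Hi Hy Hex). lra.
  - apply int_scal. apply cell_int1; auto using rr_rng, ll_rng.
Qed.

Lemma cost_formula : social_cost x n =
  sumR n (fun j => ind (first_at x j) * ((rr x n (x j) * rr x n (x j) + ll x n (x j) * ll x n (x j)) / 8)).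
Proof.
  unfold social_cost. apply Rint_eq. pose proof PI_pos'.
  apply (is_RInt_exc (exc x n n) (mind x n) (fun y => sumR n (fun j => ind (first_at x j) * (ind (cellb x n (x j) y) * arcd (x j) y)))); [lra| |].
  - intros y Hy Hex. apply PW_mind; auto.
  - apply (int_sum 0 (2 * PI) (fun j y => ind (first_at x j) * (ind (cellb x n (x j) y) * arcd (x j) y))).
    intros j Hj. apply int_scal. apply cell_int2; auto using rr_rng, ll_rng.
Qed.

Lemma sum_formula : sumR n (fun j => ind (first_at x j) * ((rr x n (x j) + ll x n (x j)) / 2)) = 2 * PI.
Proof.
  pose proof PI_pos'.
  apply (int_unique (fun _ => 1) 0 (2 * PI)).
  - apply (is_RInt_exc (exc x n n) (fun _ => 1) (fun y => sumR n (fun j => ind (first_at x j) * ind (cellb x n (x j) y)))); [lra| |].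
    + intros y Hy Hex. apply PW_one; auto.
    + apply (int_sum 0 (2 * PI) (fun j y => ind (first_at x j) * ind (cellb x n (x j) y))).
      intros j Hj. apply int_scal. apply cell_int1; auto using rr_rng, ll_rng.
  - replace (2 * PI) with ((2 * PI - 0) * 1) at 2 by lra. apply int_const.
Qed.
End Formulas.

End P5M.

Module P6M.
Import P1M.
Import P2M.
Import P3M.
Import P4M.
Import P5M.
Import Defs.
Open Scope R_scope.

Lemma minf_ext P P' h n : (forall k, (k < n)%nat -> P k = P' k) -> minf P h n = minf P' h n.
Proof. induction n; simpl; intros H; auto. rewrite H by lia. rewrite IHn by (intros; apply H; lia). auto. Qed.

Lemma gR_excl y n i p : (i < n)%nat -> y i = p -> gR y n n p = gR y n i p.
Proof. intros Hi Hp. unfold gR. apply minf_ext. intros k Hk. unfold PR.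
  destruct (Nat.eq_dec k i). - subst k. rewrite Hp, Reqb_refl, Nat.eqb_refl. simpl. rewrite andb_false_r. auto.
  - rewrite (proj2 (Nat.eqb_neq k n)) by lia. rewrite (proj2 (Nat.eqb_neq k i)) by lia. auto. Qed.
Lemma gL_excl y n i p : (i < n)%nat -> y i = p -> gL y n n p = gL y n i p.
Proof. intros Hi Hp. unfold gL. apply minf_ext. intros k Hk. unfold PR.
  destruct (Nat.eq_dec k i). - subst k. rewrite Hp, Reqb_refl, Nat.eqb_refl. simpl. rewrite andb_false_r. auto.
  - rewrite (proj2 (Nat.eqb_neq k n)) by lia. rewrite (proj2 (Nat.eqb_neq k i)) by lia. auto. Qed.

Lemma sumR_term n f k : (forall j, (j < n)%nat -> 0 <= f j) -> (k < n)%nat -> f k <= sumR n f.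
Proof. induction n; intros H Hk; simpl; [lia|]. assert (0 <= sumR n f) by (apply sumR_nonneg; intros; apply H; lia).
  destruct (Nat.eq_dec k n). - subst. lra. - assert (f k <= sumR n f) by (apply IHn; [intros; apply H; lia|lia]).
  assert (0 <= f n) by (apply H; lia). lra. Qed.
Lemma sumR_term2 n f k1 k2 : (forall j, (j < n)%nat -> 0 <= f j) -> (k1 < n)%nat -> (k2 < n)%nat -> k1 <> k2 ->
  f k1 + f k2 <= sumR n f.
Proof. induction n; intros H Hk1 Hk2 Hne; simpl; [lia|].
  assert (Hn0 : 0 <= f n) by (apply H; lia).
  destruct (Nat.eq_dec k1 n); [|destruct (Nat.eq_dec k2 n)].
  - subst. assert (f k2 <= sumR n f) by (apply sumR_term; auto; try lia; intros; apply H; lia). lra.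
  - subst. assert (f k1 <= sumR n f) by (apply sumR_term; auto; try lia; intros; apply H; lia). lra.
  - assert (f k1 + f k2 <= sumR n f) by (apply IHn; auto; try lia; intros; apply H; lia). lra. Qed.

Lemma nplayers_ge1 y n p i : (i < n)%nat -> y i = p -> 1 <= nplayers_at y n p.
Proof. intros Hi Hp. unfold nplayers_at. replace 1 with (ind (Reqb (y i) p)).
  apply (sumR_term n (fun j => ind (Reqb (y j) p))); auto. intros; apply ind_range.
  rewrite Hp, Reqb_refl; auto. Qed.
Lemma nplayers_ge2 y n p i k : (i < n)%nat -> (k < n)%nat -> i <> k -> y i = p -> y k = p -> 2 <= nplayers_at y n p.
Proof. intros Hi Hk Hik Hp Hq. unfold nplayers_at.
  assert (H := sumR_term2 n (fun j => ind (Reqb (y j) p)) i k ltac:(intros; apply ind_range) Hi Hk Hik).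
  simpl in H. rewrite Hp, Hq, Reqb_refl in H. simpl in H. lra. Qed.

Lemma pred_gap y n e z kz : validn n y -> (kz < n)%nat -> kz <> e -> y kz = z ->
  exists k, (k < n)%nat /\ k <> e /\ gL y n e z <= gR y n e (y k).
Proof.
  intros Hv Hkz Hke Hz. assert (Hzo : onc z) by (subst; apply Hv; auto).
  destruct (gL_cases y n e z Hv Hzo) as [[ku [Hku [Hkue [Hne El]]]]|[El Hall]].
  - exists ku. split; auto. split; auto. set (u := y ku) in *. rewrite El.
    assert (Huo : onc u) by (apply Hv; auto).
    apply gR_ge. 2:{ pose proof (off_range u z Huo Hzo); lra. }
    intros k Hk Hke' Hku'. assert (Hwo : onc (y k)) by (apply Hv; auto).
    destruct (Rle_dec (off u z) (off u (y k))) as [?|Hlt]; auto. exfalso.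
    destruct (Req_dec (y k) z) as [E|E]. { rewrite E in Hlt; lra. }
    assert (E1 : off (y k) z = off u z - off u (y k)) by (apply off_V1; auto; lra).
    assert (P := off_pos u (y k) Huo Hwo (not_eq_sym Hku')).
    assert (gL y n e z <= off (y k) z) by (apply gL_le; auto). lra.
  - exists kz. split; auto. split; auto. rewrite El, Hz.
    destruct (gR_cases y n e z Hv Hzo) as [[kv [Hkv [Hkve [Hne Er]]]]|[Er _]].
    + exfalso; apply Hne; apply Hall; auto.
    + lra.
Qed.

Lemma dev_bound y n i G : validn n y -> (2 <= n)%nat -> (i < n)%nat ->
  (forall k, (k < n)%nat -> k <> i -> gR y n i (y k) <= G) ->
  payoff y n i <= G / 2.
Proof.
  intros Hv Hn2 Hi HG. set (p := y i). assert (Hpo : onc p) by (apply Hv; auto).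
  rewrite payoff_formula by (auto; lia). unfold rr, ll. fold p.
  rewrite (gR_excl y n i p Hi eq_refl), (gL_excl y n i p Hi eq_refl).
  pose proof (gR_pos y n i p Hv Hpo). pose proof (gL_pos y n i p Hv Hpo).
  assert (Hq1 := nplayers_ge1 y n p i Hi eq_refl).
  destruct (classic (exists k, (k < n)%nat /\ k <> i /\ y k = p)) as [[k [Hk [Hki Hyk]]]|HT].
  - assert (Hq2 := nplayers_ge2 y n p i k Hi Hk (not_eq_sym Hki) eq_refl Hyk).
    assert (A : gR y n i p <= G) by (rewrite <- Hyk; apply HG; auto).
    destruct (pred_gap y n i p k Hv Hk Hki Hyk) as [k' [Hk' [Hk'i B]]].
    assert (B' : gL y n i p <= G) by (specialize (HG k' Hk' Hk'i); lra).
    set (q := nplayers_at y n p) in *.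
    assert (/ q <= / 2) by (apply Rinv_le_contravar; lra).
    assert (0 < / q) by (apply Rinv_0_lt_compat; lra).
    apply Rle_trans with (/ 2 * ((gR y n i p + gL y n i p) / 2)).
    + apply Rmult_le_compat_r; lra.
    + lra.
  - assert (Hnot : forall k, (k < n)%nat -> k <> i -> y k <> p) by (intros k Hk Hki E; apply HT; eauto).
    set (q := nplayers_at y n p) in *.
    assert (/ q <= 1) by (rewrite <- Rinv_1; apply Rinv_le_contravar; lra).
    assert (0 < / q) by (apply Rinv_0_lt_compat; lra).
    assert (Hsum : gR y n i p + gL y n i p <= G).
    { destruct (gL_cases y n i p Hv Hpo) as [[ku [Hku [Hkui [Hne El]]]]|[El Hall]].
      2:{ exfalso. destruct (Nat.eq_dec i 0); [apply (Hnot 1%nat)|apply (Hnot 0%nat)]; try lia; apply Hall; lia. }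
      set (u := y ku) in *. assert (Huo : onc u) by (apply Hv; auto).
      assert (Gu := HG ku Hku Hkui). fold u in Gu.
      destruct (gR_cases y n i u Hv Huo) as [[kv [Hkv [Hkvi [Hne2 Er]]]]|[Er Hall]].
      + set (v := y kv) in *. assert (Hvo : onc v) by (apply Hv; auto).
        assert (Hvp : v <> p) by (apply Hnot; auto).
        assert (Pv := off_pos u v Huo Hvo (not_eq_sym Hne2)).
        assert (Lv : gL y n i p <= off v p) by (apply gL_le; auto).
        assert (Hlt : off u p < off u v).
        { destruct (Rlt_dec (off u p) (off u v)) as [?|Hn]; auto. exfalso.
          assert (E1 : off v p = off u p - off u v) by (apply off_V1; auto; lra). lra. }
        assert (E2 : off p v = off u v - off u p) by (apply off_V1; auto; lra).
        assert (Rv : gR y n i p <= off p v) by (apply gR_le; auto; congruence).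
        lra.
      + assert (Rv : gR y n i p <= off p u) by (apply gR_le; auto; apply Hnot; auto).
        rewrite (off_sym u p) in Rv by (auto; intro E; apply (Hnot ku); auto).
        lra. }
    apply Rle_trans with (1 * ((gR y n i p + gL y n i p) / 2)).
    + apply Rmult_le_compat_r; lra.
    + lra.
Qed.

End P6M.

Module P7M.
Import P1M.
Import P2M.
Import P3M.
Import P4M.
Import P5M.
Import P6M.
Import Defs.
Open Scope R_scope.

Fixpoint maxf (h : nat -> R) (n : nat) : R :=
  match n with O => 0 | S k => Rmax (maxf h k) (h k) end.
Lemma maxf_ge h n j : (j < n)%nat -> h j <= maxf h n.
Proof. induction n; intros Hj; simpl; [lia|]. destruct (Nat.eq_dec j n).
  - subst; apply Rmax_r. - eapply Rle_trans; [apply IHn; lia|apply Rmax_l]. Qed.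
Lemma maxf_attain h n : (1 <= n)%nat -> (forall j, (j < n)%nat -> 0 <= h j) -> exists j, (j < n)%nat /\ maxf h n = h j.
Proof. induction n; intros Hn Hp; [lia|]. simpl. destruct n.
  - exists 0%nat; split; auto. simpl. apply Rmax_right. apply Hp; lia.
  - destruct IHn as [j [Hj E]]; [lia|intros; apply Hp; lia|].
    unfold Rmax; destruct Rle_dec. + exists (S n); split; auto. + exists j; split; auto; lia. Qed.

Lemma valid_validn n x : valid n x -> validn n x.
Proof. auto. Qed.

Lemma upd_valid n x i p : validn n x -> onc p -> validn n (upd x i p).
Proof. intros Hv Hp j Hj. unfold upd. destruct (Nat.eqb j i); auto. Qed.

Lemma sum_delta n i : (i < n)%nat -> sumR n (fun j => ind (Nat.eqb j i)) = 1.
Proof. induction n; intros Hi; simpl; [lia|]. destruct (Nat.eq_dec i n).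
  - subst. rewrite Nat.eqb_refl. rewrite sumR_zero. simpl; lra. intros k Hk.
    rewrite (proj2 (Nat.eqb_neq k n)) by lia; auto.
  - rewrite IHn by lia. rewrite (proj2 (Nat.eqb_neq n i)) by lia. simpl; lra. Qed.

Lemma off_wr_eq z d : onc z -> 0 <= d < 2 * PI -> onc (wr (z + d)) /\ off z (wr (z + d)) = d.
Proof. unfold onc, wr, off; intros; destruct Rlt_dec; destruct Rle_dec; split; lra. Qed.

Definition Mx x n := maxf (fun j => rr x n (x j)) n.

Section NE.
Variable n : nat.
Variable x : profile.
Hypothesis HNE : is_NE n x.
Hypothesis Hn : (1 <= n)%nat.

Lemma Hv : validn n x. Proof. apply HNE. Qed.

Lemma M_rng : 0 < Mx x n <= 2 * PI.
Proof.
  destruct (maxf_attain (fun j => rr x n (x j)) n Hn) as [j [Hj E]].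
  { intros j Hj. left; apply gR_pos; [apply Hv|apply Hv; auto]. }
  unfold Mx. rewrite E. split. apply gR_pos; [apply Hv|apply Hv; auto]. apply gR_le2.
Qed.

Lemma rr_le_M j : (j < n)%nat -> rr x n (x j) <= Mx x n.
Proof. intros. unfold Mx. apply (maxf_ge (fun j => rr x n (x j))); auto. Qed.

Lemma ll_le_M j : (j < n)%nat -> ll x n (x j) <= Mx x n.
Proof. intros Hj. destruct (pred_gap x n n (x j) j Hv Hj ltac:(lia) eq_refl) as [k [Hk [_ H]]].
  unfold ll. eapply Rle_trans; [apply H|]. apply rr_le_M; auto. Qed.

Lemma NE_gap i : (i < n)%nat -> nplayers_at x n (x i) * Mx x n <= rr x n (x i) + ll x n (x i).
Proof.
  intros Hi. set (M := Mx x n). pose proof M_rng as HM. fold M in HM.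
  destruct (maxf_attain (fun j => rr x n (x j)) n Hn) as [j0 [Hj0 E0]].
  { intros j Hj. left; apply gR_pos; [apply Hv|apply Hv; auto]. }
  set (u0 := x j0) in *. assert (Hu0 : onc u0) by (apply Hv; auto).
  assert (EM : M = gR x n n u0) by (unfold M, Mx; rewrite E0; reflexivity).
  destruct (off_wr_eq u0 (M / 2) Hu0 ltac:(lra)) as [Hpo Hoff].
  set (p := wr (u0 + M / 2)) in *.
  assert (key : forall k, (k < n)%nat -> 0 < off u0 (x k) -> M <= off u0 (x k)).
  { intros k Hk Hpos. rewrite EM. apply gR_le; auto; try lia.
    intro E. rewrite E, off_self in Hpos. lra. }
  assert (Hxk : forall k, (k < n)%nat -> onc (x k)) by (intros; apply Hv; auto).
  assert (Np : forall k, (k < n)%nat -> x k <> p).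
  { intros k Hk E. specialize (key k Hk). rewrite E, Hoff in key. lra. }
  assert (R1 : forall k, (k < n)%nat -> M / 2 <= off p (x k)).
  { intros k Hk. destruct (Rle_dec (M / 2) (off p (x k))) as [?|Hl]; auto. exfalso.
    pose proof (off_range p (x k) Hpo (Hxk k Hk)).
    assert (E : off u0 (x k) = off u0 p + off p (x k)) by (apply off_V3; auto; lra).
    specialize (key k Hk). lra. }
  assert (L1 : forall k, (k < n)%nat -> M / 2 <= off (x k) p).
  { intros k Hk. destruct (Rle_dec (M / 2) (off (x k) p)) as [?|Hl]; auto. exfalso.
    pose proof (off_range (x k) p (Hxk k Hk) Hpo).
    assert (E : off u0 (x k) = off u0 p - off (x k) p) by (apply off_V2; auto; lra).
    specialize (key k Hk). lra. }
  set (y := upd x i p).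
  assert (Hyv : validn n y) by (apply upd_valid; auto using Hv).
  assert (Hyi : y i = p) by (unfold y, upd; rewrite Nat.eqb_refl; auto).
  assert (Hyk : forall k, k <> i -> y k = x k) by (intros k Hk; unfold y, upd; rewrite (proj2 (Nat.eqb_neq k i)); auto).
  assert (Hdev : payoff y n i <= payoff x n i) by (apply HNE; auto).
  rewrite payoff_formula in Hdev by (auto using Hv).
  rewrite (payoff_formula x n Hv Hn i Hi) in Hdev.
  rewrite Hyi in Hdev.
  assert (Hq : nplayers_at y n p = 1).
  { unfold nplayers_at. rewrite <- (sum_delta n i Hi). apply sumR_ext; intros k Hk.
    destruct (Nat.eq_dec k i). - subst. rewrite Hyi, Reqb_refl, Nat.eqb_refl; auto.
    - rewrite Hyk by auto. rewrite (proj2 (Reqb_false _ _)) by (apply Np; auto).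
      rewrite (proj2 (Nat.eqb_neq k i)); auto. }
  rewrite Hq, Rinv_1, Rmult_1_l in Hdev.
  assert (A : M / 2 <= rr y n p).
  { apply gR_ge; [|lra]. intros k Hk _ Hne. destruct (Nat.eq_dec k i); [subst; congruence|].
    rewrite Hyk by auto. apply R1; auto. }
  assert (B : M / 2 <= ll y n p).
  { apply gL_ge; [|lra]. intros k Hk _ Hne. destruct (Nat.eq_dec k i); [subst; congruence|].
    rewrite Hyk by auto. apply L1; auto. }
  set (q := nplayers_at x n (x i)) in *.
  assert (Hq1 : 1 <= q) by (apply (nplayers_ge1 x n (x i) i); auto).
  assert (M <= / q * (rr x n (x i) + ll x n (x i))) by lra.
  apply (Rmult_le_compat_l q) in H; [|lra].
  rewrite <- Rmult_assoc, Rinv_r, Rmult_1_l in H by lra. lra.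
Qed.

Lemma sum_rl : sumR n (fun j => ind (first_at x j) * (rr x n (x j) + ll x n (x j))) = 4 * PI.
Proof. pose proof (sum_formula x n Hv Hn).
  rewrite <- (Rmult_1_l (4 * PI)). replace (1 * (4 * PI)) with (2 * (2 * PI)) by lra. rewrite <- H.
  rewrite <- sumR_scal. apply sumR_ext; intros; lra. Qed.

Lemma M_even : INR n * Mx x n <= 4 * PI.
Proof.
  rewrite <- sum_rl. rewrite <- (sum_first_q x n). rewrite Rmult_comm, <- sumR_scal.
  apply sumR_le. intros j Hj. rewrite <- Rmult_assoc. rewrite (Rmult_comm (Mx x n)), Rmult_assoc.
  apply Rmult_le_compat_l; [apply ind_range|]. rewrite Rmult_comm. apply NE_gap; auto.
Qed.

Lemma cost_le_M : social_cost x n <= Mx x n * PI / 2.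
Proof.
  rewrite cost_formula by (auto using Hv).
  apply Rle_trans with (sumR n (fun j => Mx x n / 8 * (ind (first_at x j) * (rr x n (x j) + ll x n (x j))))).
  - apply sumR_le. intros j Hj. pose proof (rr_le_M j Hj). pose proof (ll_le_M j Hj).
    assert (0 < rr x n (x j)) by (apply gR_pos; auto using Hv; apply Hv; auto).
    assert (0 < ll x n (x j)) by (apply gL_pos; auto using Hv; apply Hv; auto).
    pose proof (ind_range (first_at x j)).
    assert (rr x n (x j) * rr x n (x j) + ll x n (x j) * ll x n (x j) <= Mx x n * (rr x n (x j) + ll x n (x j))) by nra.
    nra.
  - rewrite sumR_scal, sum_rl. lra.
Qed.
End NE.

End P7M.

Module P8M.
Import P1M.
Import P2M.
Import P3M.
Import P4M.
Import P5M.
Import P6M.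
Import P7M.
Import Defs.
Open Scope R_scope.

Lemma off_inj v a b : onc v -> onc a -> onc b -> off v a = off v b -> a = b.
Proof. intros Hv Ha Hb E. apply off_0; auto. rewrite (off_V1 v a b); auto; lra. Qed.

Definition Rk (v : R) (a b : R) : Prop := off v a < off v b.

Fixpoint insK (v a : R) (l : list R) : list R :=
  match l with
  | nil => a :: nil
  | b :: t => if Rlt_dec (off v a) (off v b) then a :: b :: t
              else if Rlt_dec (off v b) (off v a) then b :: insK v a t else b :: t
  end.

Lemma insK_in v a l w : onc v -> onc a -> Forall onc l -> (In w (insK v a l) <-> w = a \/ In w l).
Proof.
  intros Hv Ha. induction l as [|b t IH]; intros Hl; simpl.
  - split; intros [H|H]; auto; contradiction.
  - inversion Hl; subst. destruct Rlt_dec; [simpl; intuition (subst; auto)|]. destruct Rlt_dec.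
    + simpl. rewrite IH by auto. intuition (subst; auto).
    + assert (a = b) by (apply (off_inj v); auto; lra). subst. simpl. intuition.
Qed.

Lemma insK_onc v a l : onc v -> onc a -> Forall onc l -> Forall onc (insK v a l).
Proof. intros Hv Ha Hl. apply Forall_forall. intros w Hw. apply insK_in in Hw; auto.
  destruct Hw as [->|Hw]; auto. rewrite Forall_forall in Hl; auto. Qed.

Lemma insK_ss v a l : onc v -> onc a -> Forall onc l -> StronglySorted (Rk v) l -> StronglySorted (Rk v) (insK v a l).
Proof.
  intros Hv Ha. induction l as [|b t IH]; intros Hl Hs; simpl.
  - constructor; constructor.
  - inversion Hl; subst. inversion Hs; subst. destruct Rlt_dec.
    + constructor; auto. constructor; [unfold Rk; auto|]. rewrite Forall_forall in *.
      intros c Hc. specialize (H4 c Hc). unfold Rk in *; lra.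
    + destruct Rlt_dec.
      * constructor. apply IH; auto. apply Forall_forall. intros c Hc. apply insK_in in Hc; auto.
        destruct Hc as [->|Hc]. unfold Rk; lra. rewrite Forall_forall in H4; auto.
      * constructor; auto.
Qed.

Fixpoint sortK (v : R) (l : list R) : list R :=
  match l with nil => nil | a :: t => insK v a (sortK v t) end.

Lemma sortK_props v l : onc v -> Forall onc l ->
  Forall onc (sortK v l) /\ StronglySorted (Rk v) (sortK v l) /\ (forall w, In w (sortK v l) <-> In w l).
Proof.
  intros Hv. induction l as [|a t IH]; intros Hl; simpl.
  - split; [constructor|split; [constructor|tauto]].
  - inversion Hl; subst. destruct (IH H2) as [A [B C]].
    split; [apply insK_onc; auto|split; [apply insK_ss; auto|]].
    intros w. rewrite insK_in by auto. rewrite C. intuition.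
Qed.

Fixpoint locs (x : profile) (n : nat) : list R :=
  match n with O => nil | S k => x k :: locs x k end.
Lemma locs_in x n w : In w (locs x n) <-> exists k, (k < n)%nat /\ x k = w.
Proof. induction n; simpl. - split; [tauto|intros [k [Hk _]]; lia].
  - rewrite IHn. split. + intros [H|[k [Hk H]]]; [exists n; split; auto|exists k; split; auto].
    + intros [k [Hk H]]. destruct (Nat.eq_dec k n); [subst; auto|right; exists k; split; auto; lia]. Qed.

Lemma ss_nodup v l : StronglySorted (Rk v) l -> NoDup l.
Proof. induction 1; constructor; auto. intros Hin. rewrite Forall_forall in H0.
  specialize (H0 a Hin). unfold Rk in H0; lra. Qed.

Fixpoint lsum (f : R -> R) (l : list R) : R := match l with nil => 0 | a :: t => f a + lsum f t end.

Lemma lsum_sumR (g : nat -> R -> R) l n : lsum (fun a => sumR n (fun j => g j a)) l = sumR n (fun j => lsum (g j) l).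
Proof. induction l; simpl. - symmetry; apply sumR_zero; auto. - rewrite IHl, <- sumR_plus. auto. Qed.

Lemma lsum_zero l c : ~ In c l -> lsum (fun a => ind (Reqb c a)) l = 0.
Proof. induction l; simpl; intros H; auto. rewrite (proj2 (Reqb_false c a)) by (intro; apply H; auto).
  rewrite IHl by tauto. simpl; lra. Qed.

Lemma lsum_count l c : NoDup l -> In c l -> lsum (fun a => ind (Reqb c a)) l = 1.
Proof. induction 1 as [|c0 l0 Hn Hnd IH]; simpl; [tauto|]. intros [E|Hin].
  - subst. rewrite Reqb_refl, lsum_zero by auto. simpl; lra.
  - rewrite IH by auto. rewrite (proj2 (Reqb_false c c0)). simpl; lra. intro E; subst; tauto. Qed.

Lemma lsum_q x n l : NoDup l -> (forall j, (j < n)%nat -> In (x j) l) -> lsum (nplayers_at x n) l = INR n.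
Proof.
  intros Hnd Hc. unfold nplayers_at. rewrite (lsum_sumR (fun j a => ind (Reqb (x j) a))).
  rewrite <- (Rmult_1_r (INR n)), <- sumR_const. apply sumR_ext. intros j Hj.
  apply lsum_count; auto.
Qed.

Lemma sumR_ind_nat n (b : nat -> bool) : exists m : nat, sumR n (fun j => ind (b j)) = INR m.
Proof. induction n; simpl. - exists 0%nat; auto. - destruct IHn as [m E]. rewrite E.
  destruct (b n); simpl. + exists (S m). rewrite S_INR; lra. + exists m; lra. Qed.

Section Walk.
Variable M : R.
Variable kap : R -> R.
Variable q : R -> R.

Definition barc (a : R) (t : list R) : R :=
  match t with nil => 2 * PI - kap a | c :: _ => kap c - kap a end.

Fixpoint walkOK (prev : R) (l : list R) : Prop :=
  match l with
  | nil => True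
  | a :: t => q a * M <= prev + barc a t /\ barc a t <= M /\ (q a = 1 \/ q a = 2) /\ walkOK (barc a t) t
  end.

Fixpoint sumb (l : list R) : R := match l with nil => 0 | a :: t => barc a t + sumb t end.
Fixpoint lastb (prev : R) (l : list R) : R := match l with nil => prev | a :: t => lastb (barc a t) t end.

Lemma sumb_tel a t : sumb (a :: t) = 2 * PI - kap a.
Proof. revert a; induction t as [|c t IH]; intros a; simpl in *. lra. rewrite IH. simpl. lra. Qed.

Lemma walk l : forall Sm K (o : bool) prev, walkOK prev l -> prev <= M -> 0 <= M ->
  M * INR K + (if o then prev else 0) <= Sm ->
  exists K' (o' : bool), M * INR K' + (if o' then lastb prev l else 0) <= Sm + sumb l /\
     2 * INR K' + ind o' = 2 * INR K + ind o + lsum q l.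
Proof.
  induction l as [|a t IH]; intros Sm K o prev Hw Hp HM HI; simpl in *.
  - exists K, o. split; [lra|lra].
  - destruct Hw as [H1 [H2 [H3 H4]]].
    set (b := barc a t) in *.
    destruct H3 as [Q|Q]; rewrite Q in *.
    + destruct o.
      * destruct (IH (Sm + b) (S K) false b H4 H2 HM) as [K' [o' [A B]]].
        { rewrite S_INR. lra. }
        exists K', o'. split; [lra|]. rewrite B, S_INR; simpl; lra.
      * destruct (IH (Sm + b) K true b H4 H2 HM) as [K' [o' [A B]]].
        { lra. }
        exists K', o'. split; [lra|]. rewrite B; simpl; lra.
    + destruct o.
      * destruct (IH (Sm + b) (S K) true b H4 H2 HM) as [K' [o' [A B]]].
        { rewrite S_INR. lra. }
        exists K', o'. split; [lra|]. rewrite B, S_INR; simpl; lra.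
      * destruct (IH (Sm + b) (S K) false b H4 H2 HM) as [K' [o' [A B]]].
        { rewrite S_INR. lra. }
        exists K', o'. split; [lra|]. rewrite B, S_INR; simpl; lra.
Qed.
End Walk.

End P8M.

Module P9M.
Import P1M.
Import P2M.
Import P3M.
Import P4M.
Import P5M.
Import P6M.
Import P7M.
Import P8M.
Import Defs.
Open Scope R_scope.

Lemma last_In (l : list R) (d : R) : l <> nil -> In (last l d) l.
Proof. induction l as [|a t IH]; intros H; [congruence|]. destruct t as [|b t'].
  - simpl; auto. - change (In (last (b :: t') d) (a :: b :: t')). right. apply IH. discriminate. Qed.

Lemma last_dflt (c : R) l d d' : last (c :: l) d = last (c :: l) d'.
Proof. revert c; induction l as [|b l IH]; intros c; [reflexivity|].
  change (last (b :: l) d = last (b :: l) d'). apply IH. Qed.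

Lemma ss_last v (l : list R) : forall a d, StronglySorted (Rk v) (a :: l) ->
  forall w, In w (a :: l) -> off v w <= off v (last (a :: l) d).
Proof.
  induction l as [|c t IH]; intros a d SS w Hw.
  - destruct Hw as [<-|[]]; simpl; lra.
  - inversion SS as [|a0 t0 SSt Fa]; subst a0 t0. rewrite Forall_forall in Fa.
    change (last (a :: c :: t) d) with (last (c :: t) d).
    destruct Hw as [<-|Hw].
    + assert (In (last (c :: t) d) (c :: t)) by (apply last_In; discriminate).
      specialize (Fa _ H). unfold Rk in Fa. lra.
    + apply IH; auto.
Qed.

Section Odd.
Variable n : nat.
Variable x : profile.
Hypothesis HNE : is_NE n x.
Hypothesis Hn : (1 <= n)%nat.
Hypothesis Hodd : Nat.even n = false.

Let Hv := Hv n x HNE.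

Lemma q_12 a : (exists k, (k < n)%nat /\ x k = a) -> nplayers_at x n a = 1 \/ nplayers_at x n a = 2.
Proof.
  intros [k [Hk Ha]]. subst a.
  pose proof (NE_gap n x HNE Hn k Hk). pose proof (rr_le_M n x k Hk).
  pose proof (ll_le_M n x HNE Hn k Hk). pose proof (M_rng n x HNE Hn).
  pose proof (nplayers_ge1 x n (x k) k Hk eq_refl).
  destruct (sumR_ind_nat n (fun j => Reqb (x j) (x k))) as [m E].
  unfold nplayers_at in *. rewrite E in *.
  assert (INR m <= 2).
  { destruct (Rle_dec (INR m) 2); auto. exfalso. nra. }
  assert (m = 1 \/ m = 2)%nat.
  { assert (1 <= m)%nat by (apply INR_le; simpl; lra). assert (m <= 2)%nat by (apply INR_le; simpl; lra). lia. }
  destruct H5; subst; simpl; [left|right]; lra.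
Qed.

Lemma M_odd : Mx x n * (INR n + 1) <= 4 * PI.
Proof.
  pose proof (M_rng n x HNE Hn) as HM. set (M := Mx x n) in *.
  destruct (maxf_attain (fun j => rr x n (x j)) n Hn) as [j0 [Hj0 E0]].
  { intros j Hj. left; apply gR_pos; [apply Hv|apply Hv; auto]. }
  set (u0 := x j0) in *. assert (Hu0 : onc u0) by (apply Hv; auto).
  assert (EM : M = gR x n n u0) by (unfold M, Mx; rewrite E0; reflexivity).
  assert (Hxo : forall k, (k < n)%nat -> onc (x k)) by (intros; apply Hv; auto).
  destruct (gR_cases x n n u0 Hv Hu0) as [[kv [Hkv [_ [Hne Er]]]]|[Er Hall]].
  2:{ pose proof (M_even n x HNE Hn). fold M in H. rewrite EM, Er in H.
      assert (INR n <= 2) by nra. assert (n <= 2)%nat by (apply INR_le; simpl; lra).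
      assert (n = 1)%nat. { destruct n as [|[|[|]]]; simpl in Hodd; try discriminate; lia. }
      subst. rewrite EM, Er. simpl. lra. }
  set (v0 := x kv) in *. assert (Hv0 : onc v0) by (apply Hv; auto).
  set (kap := off v0).
  assert (Hk : forall w, onc w -> 0 <= kap w < 2 * PI) by (intros; apply off_range; auto).
  assert (key : forall k, (k < n)%nat -> 0 < off u0 (x k) -> M <= off u0 (x k)).
  { intros k Hk' Hpos. rewrite EM. apply gR_le; auto; try lia.
    intro E. rewrite E, off_self in Hpos. lra. }
  assert (Fl : Forall onc (locs x n)).
  { apply Forall_forall. intros w Hw. apply locs_in in Hw. destruct Hw as [k [? <-]]; auto. }
  destruct (sortK_props v0 (locs x n) Hv0 Fl) as [Fz [SSz Inz]].
  set (zs := sortK v0 (locs x n)) in *.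
  assert (Inz' : forall w, In w zs <-> exists k, (k < n)%nat /\ x k = w) by (intros; rewrite Inz; apply locs_in).
  assert (Zo : forall w, In w zs -> onc w) by (rewrite Forall_forall in Fz; auto).
  assert (OffUp : forall a c, onc a -> onc c -> kap a < kap c -> off a c = kap c - kap a).
  { intros a c Ha Hc H. apply off_V1; auto. unfold kap in H; lra. }
  assert (OffDn : forall a w, onc a -> onc w -> kap w < kap a -> off a w = 2 * PI - (kap a - kap w)).
  { intros a w Ha Hw H. assert (a <> w) by (intro; subst; lra).
    rewrite (off_sym w a) by auto. rewrite (OffUp w a) by auto. lra. }
  assert (K1 : forall w, In w zs -> kap w <= 2 * PI - M).
  { intros w Hw. destruct (Rle_dec (kap w) (2 * PI - M)) as [?|Hl]; auto. exfalso.
    apply Inz' in Hw. destruct Hw as [k [Hk' Hw]]. subst w.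
    assert (Hne2 : x k <> v0) by (intro E; unfold kap in Hl; rewrite E, off_self in Hl; lra).
    assert (E1 : off (x k) v0 = 2 * PI - kap (x k)) by (unfold kap; apply off_sym; auto).
    assert (E2 : off u0 (x k) = off u0 v0 - off (x k) v0) by (apply off_V2; auto; lra).
    pose proof (off_pos (x k) v0 (Hxo k Hk') Hv0 Hne2).
    specialize (key k Hk'). lra. }
  assert (Hzs : zs <> nil).
  { intro E. assert (In (x 0%nat) zs) by (apply Inz'; exists 0%nat; split; auto; lia). rewrite E in H; auto. }
  destruct zs as [|z0 zt] eqn:Ezs; [congruence|].
  assert (Kz0 : kap z0 = 0).
  { assert (Hin : In v0 (z0 :: zt)) by (apply Inz'; exists kv; auto).
    destruct Hin as [E|Hin]. - subst z0. unfold kap. apply off_self.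
    - inversion SSz; subst. rewrite Forall_forall in H2. specialize (H2 v0 Hin). unfold Rk in H2.
      fold kap in H2. unfold kap in H2 at 2. rewrite off_self in H2. pose proof (Hk z0 (Zo z0 (or_introl eq_refl))). lra. }
  set (q := nplayers_at x n).
  assert (WOK : forall l prev, StronglySorted (Rk v0) l -> (forall w, In w l -> In w (z0 :: zt)) ->
             (forall w, In w (z0 :: zt) -> In w l \/ forall c, In c l -> kap w < kap c) ->
             (forall a t, l = a :: t -> ll x n a <= prev) ->
             walkOK M kap q prev l).
  { induction l as [|a t IH]; intros prev SS Hsub Hpos Hprev; simpl; auto.
    assert (Ha : In a (z0 :: zt)) by (apply Hsub; simpl; auto).
    assert (Hao : onc a) by auto.
    destruct (proj1 (Inz' a) Ha) as [ka [Hka Exa]].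
    inversion SS as [|a0 t0 SSt Fa]; subst a0 t0. rewrite Forall_forall in Fa.
    assert (RB : rr x n a <= barc kap a t).
    { destruct t as [|c t'].
      - simpl. destruct (Req_dec a v0) as [E|E].
        + rewrite E. unfold kap. rewrite off_self. rewrite Rminus_0_r. apply gR_le2.
        + unfold rr. rewrite <- Exa. apply Rle_trans with (off (x ka) v0).
          * apply gR_le; auto; try lia. rewrite Exa; auto.
          * rewrite Exa. unfold kap. rewrite (off_sym v0 a) by auto. lra.
      - simpl. assert (Hc : In c (z0 :: zt)) by (apply Hsub; simpl; auto).
        destruct (proj1 (Inz' c) Hc) as [kc [Hkc Exc]].
        assert (Hco : onc c) by auto. specialize (Fa c (or_introl eq_refl)). unfold Rk in Fa. fold kap in Fa.
        rewrite <- (OffUp a c) by auto. unfold rr. rewrite <- Exc. apply gR_le; auto; try lia.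
        intro E. rewrite Exc in E. rewrite E in Fa; lra. }
    assert (BR : barc kap a t <= rr x n a).
    { unfold rr. apply gR_ge.
      - intros k Hk' _ Hne'. assert (Hw : In (x k) (z0 :: zt)) by (apply Inz'; eauto).
        assert (Hwo : onc (x k)) by auto.
        destruct (Hpos (x k) Hw) as [Hin|Hlt].
        + destruct Hin as [E|Hin]; [congruence|].
          specialize (Fa (x k) Hin). unfold Rk in Fa; fold kap in Fa. rewrite OffUp by auto.
          destruct t as [|c t']; [inversion Hin|]. simpl.
          destruct Hin as [E|Hin]; [subst; lra|].
          inversion SSt; subst. rewrite Forall_forall in H2. specialize (H2 _ Hin). unfold Rk in H2. fold kap in H2. lra.
        + specialize (Hlt a (or_introl eq_refl)). rewrite OffDn by auto. pose proof (Hk (x k) Hwo).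
          destruct t as [|c t']; simpl; [lra|].
          assert (onc c) by (apply Zo; apply Hsub; simpl; auto). pose proof (Hk c H0). lra.
      - destruct t as [|c t']; simpl; pose proof (Hk a Hao); [lra|].
        assert (onc c) by (apply Zo; apply Hsub; simpl; auto). pose proof (Hk c H0). lra. }
    assert (RM : rr x n a <= M) by (rewrite <- Exa; apply rr_le_M; auto).
    split; [|split; [lra|split]].
    - specialize (Hprev a t eq_refl). rewrite <- Exa in Hprev, RB |- *.
      pose proof (NE_gap n x HNE Hn ka Hka) as G. fold M in G. unfold q. lra.
    - apply q_12; eauto.
    - apply IH; auto.
      + intros w Hw. apply Hsub; simpl; auto.
      + intros w Hw. destruct (Hpos w Hw) as [[E|Hin]|Hlt]; auto.
        * right. intros c Hc. subst w. specialize (Fa c Hc). unfold Rk in Fa; auto.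
        * right. intros c Hc. apply Hlt; simpl; auto.
      + intros c t' Et. subst t. simpl.
        assert (Hc : In c (z0 :: zt)) by (apply Hsub; simpl; auto).
        destruct (proj1 (Inz' c) Hc) as [kc [Hkc Exc]].
        assert (Hco : onc c) by auto. specialize (Fa c (or_introl eq_refl)). unfold Rk in Fa. fold kap in Fa.
        rewrite <- (OffUp a c) by auto. unfold ll. rewrite <- Exa. apply gL_le; auto; try lia.
        rewrite Exa. intro E. rewrite E in Fa. lra. }
  set (zl := last (z0 :: zt) z0).
  assert (Hzl : In zl (z0 :: zt)) by (apply last_In; discriminate).
  assert (Hzlo : onc zl) by auto.
  set (prev := 2 * PI - kap zl).
  assert (Hlastb : forall l p a d, lastb kap p (a :: l) = 2 * PI - kap (last (a :: l) d)).
  { induction l as [|c l IH]; intros p a d; [reflexivity|].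
    change (lastb kap p (a :: c :: l)) with (lastb kap (barc kap a (c :: l)) (c :: l)).
    rewrite (IH _ c d). reflexivity. }
  assert (Hall : forall w, In w (z0 :: zt) -> kap w <= kap zl).
  { intros w Hw. unfold kap, zl. apply ss_last; auto. }
  assert (Pz0 : ll x n z0 <= prev).
  { destruct (proj1 (Inz' z0) (or_introl eq_refl)) as [k0 [Hk0 Ex0]].
    destruct (Req_dec zl z0) as [E|E].
    - unfold prev. rewrite E, Kz0, Rminus_0_r. apply gL_le2.
    - destruct (proj1 (Inz' zl) Hzl) as [kl [Hkl Exl]].
      unfold ll. rewrite <- Ex0. apply Rle_trans with (off zl z0).
      + rewrite Ex0, <- Exl. apply gL_le; auto; try lia. rewrite Exl; auto.
      + assert (Hlt : kap z0 < kap zl).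
        { assert (Hz0 : onc z0) by (apply Zo; simpl; auto).
          destruct (Rle_lt_or_eq_dec _ _ (Hall z0 (or_introl eq_refl))) as [?|Eq]; auto.
          exfalso. apply E. apply (off_inj v0); auto. }
        rewrite (OffDn zl z0 Hzlo (Zo z0 (or_introl eq_refl)) Hlt). unfold prev. lra. }
  assert (W : walkOK M kap q prev (z0 :: zt)).
  { apply WOK. exact SSz. intros w Hw; exact Hw. intros w Hw; left; exact Hw. intros a t E; inversion E; subst; exact Pz0. }
  assert (Hpm : prev <= M).
  { destruct W as [_ [B _]]. (* barc of z0, not the last one *) clear B.
    destruct (proj1 (Inz' zl) Hzl) as [kl [Hkl Exl]].
    assert (rr x n zl <= M) by (rewrite <- Exl; apply rr_le_M; auto).
    assert (prev <= rr x n zl).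
    { unfold rr. apply gR_ge; [|unfold prev; pose proof (Hk zl Hzlo); lra].
      intros k Hk' _ Hne'. assert (Hw : In (x k) (z0 :: zt)) by (apply Inz'; eauto).
      assert (Hwo : onc (x k)) by auto. pose proof (Hall _ Hw).
      destruct (Rle_lt_or_eq_dec _ _ H0).
      - rewrite OffDn by auto. unfold prev. pose proof (Hk (x k) Hwo); lra.
      - exfalso. apply Hne'. apply (off_inj v0); auto. }
    lra. }
  destruct (walk M kap q (z0 :: zt) 0 0 false prev W Hpm ltac:(lra) ltac:(simpl; lra)) as [K' [o' [A B]]].
  rewrite sumb_tel, Kz0 in A. rewrite (Hlastb zt prev z0 z0) in A. fold zl in A.
  assert (Lq : lsum q (z0 :: zt) = INR n).
  { unfold q. apply lsum_q. rewrite <- Ezs. apply (ss_nodup v0); rewrite Ezs; auto.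
    intros j Hj. apply Inz'; eauto. }
  rewrite Lq in B. simpl in B.
  assert (KM : M <= 2 * PI - kap zl) by (pose proof (K1 zl Hzl); lra).
  destruct o'.
  - simpl in B. assert (INR n = 2 * INR K' + 1) by lra. rewrite H. nra.
  - exfalso. simpl in B. assert (INR n = INR (2 * K')) by (rewrite mult_INR; simpl; lra).
    apply INR_eq in H. subst n. rewrite Nat.even_mul in Hodd. simpl in Hodd. discriminate.
Qed.
End Odd.

End P9M.

Module P10M.
Import P1M.
Import P2M.
Import P3M.
Import P4M.
Import P5M.
Import P6M.
Import P7M.
Import P8M.
Import P9M.
Import Defs.
Open Scope R_scope.

Lemma ind_nonneg b : 0 <= ind b. Proof. destruct b; simpl; lra. Qed.
Lemma ind_le1 b : ind b <= 1. Proof. destruct b; simpl; lra. Qed.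
Lemma cost_lower n x : validn n x -> (1 <= n)%nat -> PI * PI / INR n <= social_cost x n.
Proof.
  intros Hv Hn. rewrite cost_formula by auto.
  set (w := fun j => ind (first_at x j)). set (r := fun j => rr x n (x j)). set (l := fun j => ll x n (x j)).
  set (W := sumR n w). set (A := sumR n (fun j => w j * (r j * r j + l j * l j))).
  assert (HS : sumR n (fun j => w j * (r j + l j)) = 4 * PI).
  { pose proof (sum_formula x n Hv Hn). replace (4 * PI) with (2 * (2 * PI)) by lra. rewrite <- H.
    rewrite <- sumR_scal. apply sumR_ext; intros; unfold w, r, l; lra. }
  assert (HWn : W <= INR n).
  { unfold W. rewrite <- (Rmult_1_r (INR n)), <- sumR_const. apply sumR_le. intros; apply ind_le1. }
  assert (HW1 : 1 <= W).
  { assert (Hw0 : w 0%nat = 1).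
    { unfold w. assert (first_at x 0 = true) by (apply first_at_iff; intros; lia). rewrite H; auto. }
    assert (w 0%nat <= sumR n w) by (apply (sumR_term n w 0%nat); [intros; apply ind_nonneg|lia]).
    unfold W; lra. }
  set (mu := 4 * PI / (2 * W)).
  assert (Hpos : 0 <= sumR n (fun j => w j * ((r j - mu) * (r j - mu) + (l j - mu) * (l j - mu)))).
  { apply sumR_nonneg. intros j Hj. apply Rmult_le_pos. unfold w; apply ind_nonneg. pose proof (Rle_0_sqr (r j - mu)); pose proof (Rle_0_sqr (l j - mu)); unfold Rsqr in *; lra. }
  assert (Hexp : sumR n (fun j => w j * ((r j - mu) * (r j - mu) + (l j - mu) * (l j - mu))) =
     A - 2 * mu * (4 * PI) + 2 * mu * mu * W).
  { rewrite (sumR_ext n _ (fun j => (w j * (r j * r j + l j * l j) + (-2 * mu) * (w j * (r j + l j))) + (2 * mu * mu) * w j)) by (intros; ring).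
    rewrite !sumR_plus, !sumR_scal. unfold A, W. rewrite HS. ring. }
  assert (HA : (4 * PI) * (4 * PI) / (2 * W) <= A).
  { unfold mu in *. assert (0 < W) by lra.
    assert (E : A - 2 * (4 * PI / (2 * W)) * (4 * PI) + 2 * (4 * PI / (2 * W)) * (4 * PI / (2 * W)) * W
              = A - (4 * PI) * (4 * PI) / (2 * W)) by (field; lra). lra. }
  unfold A in HA.
  replace (sumR n (fun j => ind (first_at x j) * ((rr x n (x j) * rr x n (x j) + ll x n (x j) * ll x n (x j)) / 8)))
    with (/ 8 * sumR n (fun j => w j * (r j * r j + l j * l j))).
  2:{ rewrite <- sumR_scal. apply sumR_ext; intros; unfold w, r, l; lra. }
  pose proof PI_pos'. assert (0 < INR n) by lra.
  apply Rle_trans with (/ 8 * ((4 * PI) * (4 * PI) / (2 * W))); [|lra].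
  replace (/ 8 * (4 * PI * (4 * PI) / (2 * W))) with (PI * PI / W) by (field; lra).
  apply Rmult_le_compat_l; [nra|]. apply Rinv_le_contravar; lra.
Qed.

End P10M.

Module P11M.
Import P1M.
Import P2M.
Import P3M.
Import P4M.
Import P5M.
Import P6M.
Import P7M.
Import P8M.
Import P9M.
Import P10M.
Import Defs.
Open Scope R_scope.

Definition cfg (m : nat) (f : nat -> nat) : profile := fun j => INR (f j) * (2 * PI / INR m).

Section Config.
Variables (n m : nat) (f : nat -> nat).
Hypothesis Hn : (1 <= n)%nat.
Hypothesis Hm : (1 <= m)%nat.
Hypothesis Hf : forall j, (j < n)%nat -> (f j < m)%nat.
Hypothesis Hsurj : forall b, (b < m)%nat -> exists j, (j < n)%nat /\ f j = b.
Hypothesis Hq2 : forall i, (i < n)%nat -> nplayers_at (cfg m f) n (cfg m f i) <= 2.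

Let s := 2 * PI / INR m.
Let cx := cfg m f.

Lemma INRm_pos : 0 < INR m. Proof. apply lt_0_INR; lia. Qed.
Lemma s_pos : 0 < s. Proof. unfold s. pose proof PI_pos'. pose proof INRm_pos. apply Rdiv_lt_0_compat; lra. Qed.
Lemma ms : INR m * s = 2 * PI. Proof. unfold s. pose proof INRm_pos. field; lra. Qed.

Lemma loc_onc a : (a < m)%nat -> onc (INR a * s).
Proof. intros Ha. pose proof s_pos. pose proof ms. assert (INR a + 1 <= INR m) by (rewrite <- S_INR; apply le_INR; lia).
  pose proof (pos_INR a). unfold onc; split; nra. Qed.

Lemma loc_inj a b : INR a * s = INR b * s -> a = b.
Proof. intros E. pose proof s_pos. apply INR_eq. apply (Rmult_eq_reg_r s); auto; lra. Qed.

Lemma off_loc a b : (a < m)%nat -> (b < m)%nat ->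
  off (INR a * s) (INR b * s) = if Compare_dec.le_dec a b then INR (b - a) * s else (INR (b + m - a)) * s.
Proof.
  intros Ha Hb. pose proof s_pos. pose proof ms. unfold off. destruct Rle_dec as [H1|H1]; destruct Compare_dec.le_dec as [H2|H2].
  - rewrite minus_INR by auto. ring.
  - exfalso. assert (INR b < INR a) by (apply lt_INR; lia). nra.
  - exfalso. apply H1. apply Rmult_le_compat_r; [lra|]. apply le_INR; auto.
  - rewrite minus_INR by lia. rewrite plus_INR. nra.
Qed.

Lemma off_loc_ge a b : (a < m)%nat -> (b < m)%nat -> a <> b -> s <= off (INR a * s) (INR b * s).
Proof. intros Ha Hb Hab. pose proof s_pos. rewrite off_loc by auto. destruct Compare_dec.le_dec.
  - assert (1 <= INR (b - a)) by (rewrite <- INR_1; apply le_INR; lia). nra.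
  - assert (1 <= INR (b + m - a)) by (rewrite <- INR_1; apply le_INR; lia). nra. Qed.

Definition nxt (a d : nat) : nat := if Compare_dec.lt_dec (a + d) m then (a + d)%nat else (a + d - m)%nat.
Lemma nxt_lt a d : (a < m)%nat -> (d < m)%nat -> (nxt a d < m)%nat.
Proof. unfold nxt; destruct Compare_dec.lt_dec; lia. Qed.
Lemma nxt_off a d : (a < m)%nat -> (d < m)%nat -> off (INR a * s) (INR (nxt a d) * s) = INR d * s.
Proof. intros Ha Hd. rewrite off_loc by (auto; apply nxt_lt; auto). unfold nxt.
  destruct Compare_dec.lt_dec; destruct Compare_dec.le_dec; try lia; f_equal; f_equal; lia. Qed.
Lemma nxt_ne a d : (a < m)%nat -> (1 <= d < m)%nat -> nxt a d <> a.
Proof. unfold nxt; destruct Compare_dec.lt_dec; lia. Qed.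

Lemma cx_valid : validn n cx.
Proof. intros j Hj. apply loc_onc; auto. Qed.

Lemma cx_eq j k : cx j = cx k <-> f j = f k.
Proof. split; intros E. apply loc_inj; auto. unfold cx, cfg. rewrite E; auto. Qed.

Lemma rr_cx j : (j < n)%nat -> rr cx n (cx j) = s.
Proof.
  intros Hj. pose proof s_pos. pose proof ms. assert (Hs2 : s <= 2 * PI) by (assert (1 <= INR m) by (rewrite <- INR_1; apply le_INR; lia); nra).
  apply Rle_antisym.
  - destruct (Nat.eq_dec m 1) as [E1|E1].
    + assert (s = 2 * PI) by (unfold s; rewrite E1; simpl; field). rewrite H1. apply gR_le2.
    + destruct (Hsurj (nxt (f j) 1) (nxt_lt (f j) 1 (Hf j Hj) ltac:(lia))) as [j' [Hj' E]].
      unfold rr. apply Rle_trans with (off (cx j) (cx j')).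
      * apply gR_le; auto; try lia. rewrite cx_eq. rewrite E. apply nxt_ne; auto; lia.
      * unfold cx, cfg. fold s. rewrite E, nxt_off by (auto; lia). simpl; lra.
  - unfold rr. apply gR_ge; auto. intros k Hk _ Hne. unfold cx, cfg. fold s. apply off_loc_ge; auto.
    intro E. apply Hne. unfold cx, cfg. rewrite E; auto.
Qed.

Lemma ll_cx j : (j < n)%nat -> ll cx n (cx j) = s.
Proof.
  intros Hj. pose proof s_pos. pose proof ms. assert (Hs2 : s <= 2 * PI) by (assert (1 <= INR m) by (rewrite <- INR_1; apply le_INR; lia); nra).
  apply Rle_antisym.
  - destruct (Nat.eq_dec m 1) as [E1|E1].
    + assert (s = 2 * PI) by (unfold s; rewrite E1; simpl; field). rewrite H1. apply gL_le2.
    + destruct (Hsurj (nxt (f j) (m - 1)) (nxt_lt (f j) (m - 1) (Hf j Hj) ltac:(lia))) as [j' [Hj' E]].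
      assert (Hne : nxt (f j) (m - 1) <> f j) by (apply nxt_ne; auto; lia).
      unfold ll. apply Rle_trans with (off (cx j') (cx j)).
      * apply gL_le; auto; try lia. rewrite cx_eq. rewrite E. auto.
      * unfold cx, cfg. fold s. rewrite E. rewrite off_sym.
        -- rewrite nxt_off by (auto; lia). rewrite minus_INR by lia. simpl. lra.
        -- apply loc_onc; auto.
        -- apply loc_onc; apply nxt_lt; auto; lia.
        -- intro E2. apply Hne. symmetry. apply loc_inj; auto.
  - unfold ll. apply gL_ge; auto. intros k Hk _ Hne. unfold cx, cfg. fold s. apply off_loc_ge; auto.
    intro E. apply Hne. unfold cx, cfg. rewrite E; auto.
Qed.

Lemma count_first : sumR n (fun j => ind (first_at cx j)) = INR m.
Proof.
  transitivity (sumR n (fun j => sumR m (fun b => ind (Reqb (cx j) (INR b * s) && first_at cx j)))).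
  - apply sumR_ext; intros j Hj. rewrite <- (Rmult_1_r (ind (first_at cx j))).
    rewrite <- (sum_delta m (f j) (Hf j Hj)). rewrite <- sumR_scal. apply sumR_ext; intros b Hb.
    destruct (Nat.eq_dec b (f j)) as [E|E].
    + subst b. rewrite Nat.eqb_refl. assert (Reqb (cx j) (INR (f j) * s) = true) by (apply Reqb_true; reflexivity).
      rewrite H. destruct (first_at cx j); simpl; lra.
    + rewrite (proj2 (Nat.eqb_neq _ _) E). rewrite (proj2 (Reqb_false _ _)). simpl. destruct (first_at cx j); simpl; lra.
      intro E2. apply E. symmetry. apply loc_inj. unfold cx, cfg in E2. fold s in E2. auto.
  - rewrite sumR_swap. rewrite <- (Rmult_1_r (INR m)), <- sumR_const. apply sumR_ext; intros b Hb.
    apply first_count1. destruct (Hsurj b Hb) as [j [Hj E]]. exists j; split; auto. unfold cx, cfg. fold s. rewrite E; auto.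
Qed.

Lemma cx_cost : social_cost cx n = PI * PI / INR m.
Proof.
  rewrite cost_formula by (auto using cx_valid).
  rewrite (sumR_ext n _ (fun j => (s * s / 4) * ind (first_at cx j))).
  2:{ intros j Hj. rewrite rr_cx, ll_cx by auto. lra. }
  rewrite sumR_scal, count_first. unfold s. pose proof INRm_pos. field. lra.
Qed.

Lemma cx_payoff i : (i < n)%nat -> payoff cx n i = s / nplayers_at cx n (cx i).
Proof. intros Hi. rewrite payoff_formula by (auto using cx_valid). rewrite rr_cx, ll_cx by auto.
  unfold Rdiv. lra. Qed.

Lemma cx_NE : is_NE n cx.
Proof.
  split; [apply cx_valid|]. intros i Hi p Hp.
  pose proof s_pos as Hs. pose proof ms as Hms.
  set (q := nplayers_at cx n (cx i)).
  assert (Hq1 : 1 <= q) by (apply (nplayers_ge1 cx n (cx i) i); auto).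
  assert (Hq : q = 1 \/ q = 2).
  { destruct (sumR_ind_nat n (fun j => Reqb (cx j) (cx i))) as [k E]. unfold q, nplayers_at in *.
    pose proof (Hq2 i Hi). unfold nplayers_at in H. fold cx in H. rewrite E in *.
    assert (1 <= k)%nat by (apply INR_le; simpl; lra). assert (k <= 2)%nat by (apply INR_le; simpl; lra).
    assert (k = 1 \/ k = 2)%nat by lia. destruct H2; subst; simpl; [left|right]; lra. }
  rewrite cx_payoff by auto. fold q.
  set (y := upd cx i p).
  assert (Hyv : validn n y) by (apply upd_valid; auto using cx_valid).
  assert (Hyk : forall k, k <> i -> y k = cx k) by (intros k Hk; unfold y, upd; rewrite (proj2 (Nat.eqb_neq k i)); auto).
  destruct (Nat.eq_dec n 1) as [En|En].
  -
    assert (Em : m = 1%nat).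
    { destruct (Hsurj 0%nat ltac:(lia)) as [j0 [Hj0 E0]]. destruct (Hsurj (m - 1)%nat ltac:(lia)) as [j1 [Hj1 E1]].
      assert (j0 = 0%nat) by lia. assert (j1 = 0%nat) by lia. subst. lia. }
    assert (Hs2 : s = 2 * PI) by (unfold s; rewrite Em; simpl; field).
    subst n. assert (i = 0%nat) by lia. subst i.
    rewrite payoff_formula by (auto; lia).
    assert (q = 1) by (unfold q, nplayers_at; simpl; rewrite Reqb_refl; simpl; lra).
    assert (1 <= nplayers_at y 1 (y 0%nat)) by (apply (nplayers_ge1 y 1 (y 0%nat) 0%nat); auto).
    pose proof (gR_le2 y 1 1 (y 0%nat)). pose proof (gL_le2 y 1 1 (y 0%nat)).
    pose proof (gR_pos y 1 1 (y 0%nat) Hyv (Hyv 0%nat ltac:(lia))). pose proof (gL_pos y 1 1 (y 0%nat) Hyv (Hyv 0%nat ltac:(lia))).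
    unfold rr, ll. set (q' := nplayers_at y 1 (y 0%nat)) in *.
    assert (/ q' <= 1) by (rewrite <- Rinv_1; apply Rinv_le_contravar; lra).
    assert (0 < / q') by (apply Rinv_0_lt_compat; lra).
    rewrite H, Hs2. unfold Rdiv. rewrite Rinv_1. 
    apply Rle_trans with (1 * ((gR y 1 1 (y 0%nat) + gL y 1 1 (y 0%nat)) / 2)); [apply Rmult_le_compat_r; lra|lra].
  - assert (Hn2 : (2 <= n)%nat) by lia.
    assert (Hyi : y i = p) by (unfold y, upd; rewrite Nat.eqb_refl; auto).
    apply Rle_trans with ((2 * s / q) / 2).
    2:{ unfold Rdiv. apply Req_le. field. lra. }
    apply dev_bound; auto.
    intros k Hk Hki. rewrite Hyk by auto.
    set (a := f k). assert (Ha : (a < m)%nat) by (apply Hf; auto).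
    assert (Hao : onc (cx k)) by (apply cx_valid; auto).
    assert (Wit : forall j, (j < n)%nat -> j <> i -> f j <> a -> gR y n i (cx k) <= off (cx k) (cx j)).
    { intros j Hj Hji Hfa. rewrite <- (Hyk j Hji). apply gR_le; auto. rewrite Hyk by auto.
      rewrite cx_eq. auto. }
    destruct Hq as [Q|Q]; rewrite Q.
    +
      destruct (Compare_dec.le_dec m 2) as [Hm2|Hm2].
      * apply Rle_trans with (2 * PI). apply gR_le2.
        assert (INR m <= 2) by (replace 2 with (INR 2) by (simpl; lra); apply le_INR; auto). nra.
      * destruct (Hsurj (nxt a 1) (nxt_lt a 1 Ha ltac:(lia))) as [j1 [Hj1 E1]].
        destruct (Nat.eq_dec j1 i) as [Ej|Ej].
        -- destruct (Hsurj (nxt a 2) (nxt_lt a 2 Ha ltac:(lia))) as [j2 [Hj2 E2]].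
           assert (Hj2i : j2 <> i).
           { intro E. subst j2 j1. rewrite E1 in E2. unfold nxt in E2. repeat destruct Compare_dec.lt_dec; lia. }
           eapply Rle_trans. apply (Wit j2); auto. rewrite E2. apply nxt_ne; auto; lia.
           unfold cx, cfg. fold s. fold a. rewrite E2, nxt_off by (auto; lia). simpl; lra.
        -- eapply Rle_trans. apply (Wit j1); auto. rewrite E1. apply nxt_ne; auto; lia.
           unfold cx, cfg. fold s. fold a. rewrite E1, nxt_off by (auto; lia). simpl; lra.
    +
      assert (Hother : exists i', (i' < n)%nat /\ i' <> i /\ f i' = f i).
      { destruct (classic (exists i', (i' < n)%nat /\ i' <> i /\ f i' = f i)) as [H|H]; auto. exfalso.
        assert (q = 1).
        { unfold q, nplayers_at. rewrite <- (sum_delta n i Hi). apply sumR_ext; intros j Hj.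
          destruct (Nat.eq_dec j i). - subst j. rewrite Reqb_refl, Nat.eqb_refl. auto.
          - rewrite (proj2 (Nat.eqb_neq j i)) by auto. rewrite (proj2 (Reqb_false _ _)); auto.
            rewrite cx_eq. intro E; apply H; eauto. }
        lra. }
      destruct (Nat.eq_dec m 1) as [E1|E1].
      * assert (s = 2 * PI) by (unfold s; rewrite E1; simpl; field).
        apply Rle_trans with (2 * PI). apply gR_le2. lra.
      * destruct (Hsurj (nxt a 1) (nxt_lt a 1 Ha ltac:(lia))) as [j1 [Hj1 Ej1]].
        destruct (Nat.eq_dec j1 i) as [Ej|Ej].
        -- destruct Hother as [i' [Hi' [Hi'i Ei']]].
           eapply Rle_trans. apply (Wit i'); auto. rewrite Ei'. subst j1. rewrite Ej1. apply nxt_ne; auto; lia.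
           unfold cx, cfg. fold s. fold a. rewrite Ei'. subst j1. rewrite Ej1, nxt_off by (auto; lia). simpl; lra.
        -- eapply Rle_trans. apply (Wit j1); auto. rewrite Ej1. apply nxt_ne; auto; lia.
           unfold cx, cfg. fold s. fold a. rewrite Ej1, nxt_off by (auto; lia). simpl; lra.
Qed.
End Config.

End P11M.

Module P12M.
Import P1M.
Import P2M.
Import P3M.
Import P4M.
Import P5M.
Import P6M.
Import P7M.
Import P8M.
Import P9M.
Import P10M.
Import P11M.
Import Defs.
Open Scope R_scope.

Lemma sum_delta_le n c : sumR n (fun j => ind (Nat.eqb j c)) <= 1.
Proof. induction n; simpl; [lra|]. destruct (Nat.eq_dec n c).
  - subst. rewrite Nat.eqb_refl. rewrite sumR_zero. simpl; lra. intros k Hk. rewrite (proj2 (Nat.eqb_neq k c)) by lia; auto.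
  - rewrite (proj2 (Nat.eqb_neq n c)) by auto. simpl; lra. Qed.

Lemma id_q n i : (1 <= n)%nat -> (i < n)%nat -> nplayers_at (cfg n (fun j => j)) n (cfg n (fun j => j) i) <= 2.
Proof. intros Hn Hi. unfold nplayers_at. apply Rle_trans with 1; [|lra].
  rewrite <- (sum_delta n i Hi). apply Req_le. apply sumR_ext; intros j Hj.
  destruct (Nat.eq_dec j i). - subst j. rewrite Reqb_refl, Nat.eqb_refl; auto.
  - rewrite (proj2 (Nat.eqb_neq j i)) by auto. rewrite (proj2 (Reqb_false _ _)); auto.
    rewrite (cx_eq n n (fun j => j) Hn Hn). auto. Qed.

Lemma div2_q n i : (1 <= n)%nat -> (i < n)%nat ->
  nplayers_at (cfg (Nat.div2 (n + 1)) Nat.div2) n (cfg (Nat.div2 (n + 1)) Nat.div2 i) <= 2.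
Proof.
  intros Hn Hi. assert (Hm : (1 <= Nat.div2 (n + 1))%nat).
  { pose proof (Nat.div2_odd (n + 1)). destruct (Nat.odd (n + 1)); simpl in H; lia. }
  set (a := Nat.div2 i). unfold nplayers_at.
  apply Rle_trans with (sumR n (fun j => ind (Nat.eqb j (2 * a)) + ind (Nat.eqb j (2 * a + 1)))).
  - apply sumR_le. intros j Hj. destruct (Reqb _ _) eqn:E; [|change (ind false) with 0; pose proof (ind_nonneg (Nat.eqb j (2*a))); pose proof (ind_nonneg (Nat.eqb j (2*a+1))); lra].
    apply Reqb_true in E. apply (cx_eq n _ Nat.div2 Hn Hm) in E. fold a in E.
    pose proof (Nat.div2_odd j). destruct (Nat.odd j); simpl in H.
    + assert (j = 2 * a + 1)%nat by lia. subst j. rewrite Nat.eqb_refl. change (ind true) with 1. pose proof (ind_nonneg (Nat.eqb (2 * a + 1) (2 * a))). lra.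
    + assert (j = 2 * a)%nat by lia. subst j. rewrite Nat.eqb_refl. change (ind true) with 1. pose proof (ind_nonneg (Nat.eqb (2 * a) (2 * a + 1))). lra.
  - rewrite sumR_plus. pose proof (sum_delta_le n (2 * a)). pose proof (sum_delta_le n (2 * a + 1)). lra.
Qed.


End P12M.

Import P1M P2M P3M P4M P5M P6M P7M P8M P9M P10M P11M P12M.

Theorem mainTheorem17 (n : nat) (hn : (1 <= n)%nat) :
  exists opt worst best : R,
    is_glb (all_costs n) opt /\ 0 < opt /\
    is_lub (NE_costs n) worst /\
    is_glb (NE_costs n) best /\
    worst / opt = (if Nat.even n then 2 else 2 * INR n / (INR n + 1)) /\
    best / opt = 1.
Proof.
  pose proof PI_pos' as HPI.
  assert (HnR : 1 <= INR n) by (rewrite <- INR_1; apply le_INR; auto).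
  set (xo := cfg n (fun j => j)).
  assert (Ho1 : is_NE n xo).
  { apply (cx_NE n n (fun j => j)); auto. intros b Hb; exists b; auto. intros i Hi; apply id_q; auto. }
  assert (Ho2 : social_cost xo n = PI * PI / INR n).
  { apply (cx_cost n n (fun j => j)); auto. intros b Hb; exists b; auto. }
  set (m := Nat.div2 (n + 1)).
  assert (Hm : (1 <= m)%nat) by (unfold m; pose proof (Nat.div2_odd (n + 1)); destruct (Nat.odd (n + 1)); simpl in H; lia).
  assert (Hmf : forall j, (j < n)%nat -> (Nat.div2 j < m)%nat).
  { intros j Hj. unfold m. pose proof (Nat.div2_odd (n + 1)). pose proof (Nat.div2_odd j).
    destruct (Nat.odd (n + 1)), (Nat.odd j); simpl in *; lia. }
  assert (Hms : forall b, (b < m)%nat -> exists j, (j < n)%nat /\ Nat.div2 j = b).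
  { intros b Hb. exists (2 * b)%nat. split.
    - unfold m in Hb. pose proof (Nat.div2_odd (n + 1)). destruct (Nat.odd (n + 1)); simpl in *; lia.
    - apply Nat.div2_double. }
  set (xw := cfg m Nat.div2).
  assert (Hw1 : is_NE n xw) by (apply cx_NE; auto; intros; apply div2_q; auto).
  assert (Hw2 : social_cost xw n = PI * PI / INR m) by (apply cx_cost; auto).
  set (W := if Nat.even n then 2 * PI * PI / INR n else 2 * PI * PI / (INR n + 1)).
  assert (HmW : PI * PI / INR m = W).
  { unfold W, m. destruct (Nat.even n) eqn:Ev.
    - apply Nat.even_spec in Ev. destruct Ev as [k ->].
      replace (2 * k + 1)%nat with (S (2 * k)) by lia. rewrite Nat.div2_succ_double.
      rewrite mult_INR. simpl. assert (0 < INR k) by (apply lt_0_INR; lia). field; lra.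
    - assert (Od : Nat.odd n = true) by (rewrite <- Nat.negb_even, Ev; auto).
      apply Nat.odd_spec in Od. destruct Od as [k ->].
      replace (2 * k + 1 + 1)%nat with (2 * (S k))%nat by lia. rewrite Nat.div2_double.
      rewrite plus_INR, mult_INR, S_INR. simpl. pose proof (pos_INR k). field; lra. }
  exists (PI * PI / INR n), W, (PI * PI / INR n).
  assert (LB : forall x, validn n x -> PI * PI / INR n <= social_cost x n) by (intros; apply cost_lower; auto).
  split; [|split; [|split; [|split; [|split]]]].
  - split.
    + intros c [x [Hx ->]]. apply LB; auto.
    + intros b Hb. apply Hb. exists xo. split; auto. apply Ho1.
  - apply Rdiv_lt_0_compat; nra.
  - split.
    + intros c [x [Hx ->]].
      pose proof (cost_le_M n x Hx hn). pose proof (M_rng n x Hx hn).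
      unfold W. destruct (Nat.even n) eqn:Ev.
      * pose proof (M_even n x Hx hn).
        assert (Mx x n <= 4 * PI / INR n) by (apply (Rmult_le_reg_l (INR n)); [lra|]; field_simplify; lra).
        apply Rle_trans with (Mx x n * PI / 2); auto.
        apply Rle_trans with (4 * PI / INR n * PI / 2). unfold Rdiv; nra. apply Req_le; field; lra.
      * pose proof (M_odd n x Hx hn Ev).
        assert (Mx x n <= 4 * PI / (INR n + 1)) by (apply (Rmult_le_reg_l (INR n + 1)); [lra|]; field_simplify; lra).
        apply Rle_trans with (Mx x n * PI / 2); auto.
        apply Rle_trans with (4 * PI / (INR n + 1) * PI / 2). unfold Rdiv; nra. apply Req_le; field; lra.
    + intros b Hb. apply Hb. exists xw. split; auto. rewrite Hw2; auto.
  - split.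
    + intros c [x [Hx ->]]. apply LB. apply Hx.
    + intros b Hb. apply Hb. exists xo. split; auto.
  - unfold W. destruct (Nat.even n); field; lra.
  - field. split; lra.
Qed.
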